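(* Let $a,b>0$. As $q\to1-0$, $$\log\big\{(q^a:q^{a+b})_\infty\,(q^b:q^{a+b})_\infty\big\}=\frac{\pi^2}{3(a+b)\log q}+\log\Big\{2\sin\Big(\frac{a}{a+b}\pi\Big)\Big\}+O(\log q).$$
   Context: For $0<q<1$ and $c,d>0$, $(q^c:q^d)_\infty=\prod_{r=0}^{\infty}(1-q^{c+dr})$. *)

(* Defs.v *)
From Stdlib Require Import Reals.
From Coquelicot Require Import Coquelicot.
Open Scope R_scope.

Fixpoint qpoch_partial (q c d : R) (N : nat) : R :=
  match N with
  | O => 1
  | S n => qpoch_partial q c d n * (1 - Rpower q (c + d * INR n))
  end.

(* (q^c : q^d)_oo = prod_{r>=0} (1 - q^(c + d r)), as the limit of partial products. *)
Definition qpoch_inf (q c d : R) : R :=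
  real (Lim_seq (fun N => qpoch_partial q c d N)).

(* Main.v *)
Require Import Defs.
From Stdlib Require Import Reals.
From Coquelicot Require Import Coquelicot.
Open Scope R_scope.
From Stdlib Require Import Lra Lia ZArith.


Lemma incr_of_deriv (g g' : R -> R) (a b : R) : a <= b ->
  (forall t, a <= t <= b -> is_derive g t (g' t)) ->
  (forall t, a <= t <= b -> 0 <= g' t) -> g a <= g b.
Proof.
  intros Hab Hd Hp. destruct (Req_dec a b) as [->|Hne]; [lra|].
  destruct (MVT_cor2 g g' a b) as [c [Hc1 Hc2]]; [lra| |].
  - intros c Hc. apply is_derive_Reals. apply Hd. lra.
  - assert (0 <= g' c) by (apply Hp; lra). nra.
Qed.

Lemma is_derive_lin (phi : R -> R) (d c k s : R) :
  is_derive phi (c + k * s) d -> is_derive (fun t => phi (c + k * t)) s (k * d).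
Proof.
  intros H.
  assert (Hg : is_derive (fun t => c + k * t) s k).
  { auto_derive; auto; ring. }
  exact (is_derive_comp phi (fun t => c + k * t) s d k H Hg).
Qed.

Lemma is_derive_eq (f : R -> R) (x d1 d2 : R) : is_derive f x d1 -> d1 = d2 -> is_derive f x d2.
Proof. intros H ->. exact H. Qed.

Lemma second_diff (phi phi1 phi2 : R -> R) (lo hi K m h : R) :
  (forall t, lo < t < hi -> is_derive phi t (phi1 t)) ->
  (forall t, lo < t < hi -> is_derive phi1 t (phi2 t)) ->
  (forall t, lo < t < hi -> Rabs (phi2 t) <= K) ->
  0 <= h -> lo < m - h -> m + h < hi ->
  Rabs (phi (m + h) + phi (m - h) - 2 * phi m) <= K * h ^ 2.
Proof.
  intros H1 H2 H3 Hh Hlo Hhi.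
  assert (Hd1 : forall t, 0 <= t <= h -> phi1 (m + t) - phi1 (m - t) <= 2 * K * t
                  /\ - (2 * K * t) <= phi1 (m + t) - phi1 (m - t)).
  { intros t Ht. destruct (Req_dec t 0) as [->|Ht0].
    - rewrite Rplus_0_r, Rminus_0_r. lra.
    - destruct (MVT_cor2 phi1 phi2 (m - t) (m + t)) as [c [Hc1 Hc2]]; [lra| |].
      + intros c Hc. apply is_derive_Reals. apply H2. lra.
      + assert (Hk := H3 c ltac:(lra)). apply Rabs_le_between in Hk.
        replace (m + t - (m - t)) with (2 * t) in Hc1 by ring.
        rewrite Hc1. split; nra. }
  assert (Hder : forall s, 0 <= s <= h -> is_derive (fun t => phi (m + 1 * t) + phi (m + (-1) * t) - 2 * phi m) s
             (1 * phi1 (m + 1 * s) + (-1) * phi1 (m + (-1) * s) - 0)).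
  { intros s Hs.
    apply (is_derive_minus (fun t => phi (m + 1 * t) + phi (m + (-1) * t)) (fun _ => 2 * phi m)).
    - apply (is_derive_plus (fun t => phi (m + 1 * t)) (fun t => phi (m + (-1) * t))).
      + apply is_derive_lin. apply H1. lra.
      + apply is_derive_lin. apply H1. lra.
    - auto_derive; auto. }
  assert (Hup : K * 0 ^ 2 - (phi (m + 1 * 0) + phi (m + (-1) * 0) - 2 * phi m) <=
                K * h ^ 2 - (phi (m + 1 * h) + phi (m + (-1) * h) - 2 * phi m)).
  { apply (incr_of_deriv (fun t => K * t ^ 2 - (phi (m + 1 * t) + phi (m + (-1) * t) - 2 * phi m))
     (fun s => 2 * K * s - (1 * phi1 (m + 1 * s) + (-1) * phi1 (m + (-1) * s) - 0)) 0 h Hh).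
    + intros t Ht. apply (is_derive_minus (fun t => K * t ^ 2)). 
      * auto_derive; auto. simpl; ring.
      * apply Hder; auto.
    + intros t Ht. destruct (Hd1 t Ht). replace (m + -1 * t) with (m - t) by ring.
      replace (m + 1 * t) with (m + t) by ring. lra. }
  assert (Hlow : K * 0 ^ 2 + (phi (m + 1 * 0) + phi (m + (-1) * 0) - 2 * phi m) <=
                K * h ^ 2 + (phi (m + 1 * h) + phi (m + (-1) * h) - 2 * phi m)).
  { apply (incr_of_deriv (fun t => K * t ^ 2 + (phi (m + 1 * t) + phi (m + (-1) * t) - 2 * phi m))
     (fun s => 2 * K * s + (1 * phi1 (m + 1 * s) + (-1) * phi1 (m + (-1) * s) - 0)) 0 h Hh).
    + intros t Ht. apply (is_derive_plus (fun t => K * t ^ 2)). 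
      * auto_derive; auto. simpl; ring.
      * apply Hder; auto.
    + intros t Ht. destruct (Hd1 t Ht). replace (m + -1 * t) with (m - t) by ring.
      replace (m + 1 * t) with (m + t) by ring. lra. }
  replace (m + 1 * 0) with m in Hup, Hlow by ring.
  replace (m + -1 * 0) with m in Hup, Hlow by ring.
  replace (m + 1 * h) with (m + h) in Hup, Hlow by ring.
  replace (m + -1 * h) with (m - h) in Hup, Hlow by ring.
  apply Rabs_le_between. split; nra.
Qed.


Lemma sh_ge (s : R) : 0 <= s -> 2 * s <= exp s - exp (- s).
Proof.
  intros Hs.
  assert (H := incr_of_deriv (fun t => exp t - exp (- t) - 2 * t)
     (fun t => exp t + exp (- t) - 2) 0 s Hs).
  cbv beta in H; rewrite Ropp_0, exp_0 in H.
  cut (0 <= exp s - exp (-s) - 2 * s). lra.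
  replace 0 with (1 - 1 - 2 * 0) by ring. apply H.
  - intros t _; cbv beta. auto_derive; auto. ring.
  - intros t _; cbv beta. assert (Hp : exp t * exp (- t) = 1) by (rewrite <- exp_plus; replace (t + - t) with 0 by ring; apply exp_0).
    assert (0 < exp t) by apply exp_pos. assert (0 < exp (-t)) by apply exp_pos.
    assert ((exp t + exp (-t)) ^ 2 >= 4).
    { replace ((exp t + exp (-t)) ^ 2) with ((exp t - exp (-t))^2 + 4 * (exp t * exp (-t))) by ring.
      rewrite Hp. pose proof (pow2_ge_0 (exp t - exp (-t))); lra. }
    set (u := exp t + exp (-t)) in *. assert (0 < u) by (unfold u; lra).
    destruct (Rle_lt_dec 2 u); [lra|]. nra.
Qed.

Lemma sh_le (s : R) : 0 <= s -> exp s - exp (- s) <= s * (exp s + exp (- s)).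
Proof.
  intros Hs.
  assert (H := incr_of_deriv (fun t => t * (exp t + exp (- t)) - (exp t - exp (- t)))
     (fun t => t * (exp t - exp (- t))) 0 s Hs).
  cbv beta in H; rewrite Ropp_0, exp_0 in H.
  cut (0 <= s * (exp s + exp (-s)) - (exp s - exp (-s))). lra.
  replace 0 with (0 * (1 + 1) - (1 - 1)) by ring. apply H.
  - intros t _; cbv beta. auto_derive; auto. ring.
  - intros t Ht; cbv beta. assert (exp (- t) <= exp t).
    { destruct (Req_dec t 0) as [->|]; [rewrite Ropp_0; lra|]. apply Rlt_le, exp_increasing; lra. }
    apply Rmult_le_pos; lra.
Qed.

Definition E (v : R) := exp (- v) / (1 - exp (- v)) ^ 2.

Lemma exp_neg_lt1 (v : R) : 0 < v -> exp (- v) < 1.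
Proof. intros. rewrite <- exp_0. apply exp_increasing. lra. Qed.

Lemma E_alt (v : R) : 0 < v -> E v = 1 / (exp (v / 2) - exp (- (v / 2))) ^ 2.
Proof.
  intros Hv. unfold E.
  assert (Hp : exp (v/2) * exp (- (v/2)) = 1) by (rewrite <- exp_plus; replace (v/2 + - (v/2)) with 0 by ring; apply exp_0).
  assert (Hq : exp (- v) = exp (- (v/2)) * exp (- (v/2))) by (rewrite <- exp_plus; replace (-(v/2) + -(v/2)) with (-v) by field; reflexivity).
  assert (H1 := exp_neg_lt1 v Hv).
  assert (H2 : exp (- (v/2)) < exp (v / 2)) by (apply exp_increasing; lra).
  assert (0 < exp (- (v/2))) by apply exp_pos.
  assert (Ha : exp (v/2) = / exp (- (v/2))) by (field_simplify_eq; [lra|lra]).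
  rewrite Hq, Ha. field. split; [|lra].
  intro Hc. assert (exp (- (v/2)) * exp (- (v/2)) = 1) by lra. nra.
Qed.

Lemma E_le (v : R) : 0 < v -> E v <= 1 / v ^ 2.
Proof.
  intros Hv. rewrite E_alt by auto.
  assert (H := sh_ge (v/2) ltac:(lra)).
  apply Rmult_le_compat_l; [lra|]. apply Rinv_le_contravar; [nra|].
  replace (2 * (v/2)) with v in H by field. nra.
Qed.

Lemma E_ge (v : R) : 0 < v -> 1 / v ^ 2 - 1 / 4 <= E v.
Proof.
  intros Hv. rewrite E_alt by auto.
  set (s := v / 2). assert (Hs : 0 < s) by (unfold s; lra).
  assert (H1 := sh_ge s ltac:(lra)). assert (H2 := sh_le s ltac:(lra)).
  assert (Hp : exp s * exp (- s) = 1) by (rewrite <- exp_plus; replace (s + - s) with 0 by ring; apply exp_0).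
  replace v with (2 * s) by (unfold s; field).
  set (sh := exp s - exp (- s)) in *. set (ch := exp s + exp (- s)) in *.
  assert (Hc : ch ^ 2 = sh ^ 2 + 4) by (unfold ch, sh; nra).
  assert (Hsh : 0 < sh) by nra.
  destruct (Rle_lt_dec 1 s) as [Hs1|Hs1].
  - assert (1 / (2 * s) ^ 2 <= 1/4).
    { unfold Rdiv. rewrite !Rmult_1_l. apply Rinv_le_contravar; nra. }
    assert (0 < 1 / sh ^ 2) by (apply Rdiv_lt_0_compat; nra). lra.
  -
    assert (Hk : sh ^ 2 * (1 - s ^ 2) <= 4 * s ^ 2).
    { assert (sh ^ 2 <= s ^ 2 * ch ^ 2).
      { replace (s ^ 2 * ch ^ 2) with ((s * ch) ^ 2) by ring. apply pow_incr. lra. }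
      rewrite Hc in H. nra. }
    apply (Rmult_le_reg_r (sh ^ 2 * (2 * s) ^ 2)); [apply Rmult_lt_0_compat; apply pow_lt; lra|].
    replace ((1 / (2 * s) ^ 2 - 1 / 4) * (sh ^ 2 * (2 * s) ^ 2)) with (sh ^ 2 * (1 - s ^ 2)) by (field; lra).
    replace (1 / sh ^ 2 * (sh ^ 2 * (2 * s) ^ 2)) with (4 * s ^ 2) by (field; lra). lra.
Qed.

Lemma sin_le_id (z : R) : 0 <= z -> sin z <= z.
Proof.
  intros Hz.
  assert (H := incr_of_deriv (fun t => t - sin t) (fun t => 1 - cos t) 0 z Hz).
  cbv beta in H; rewrite sin_0 in H. cut (0 <= z - sin z). lra.
  replace 0 with (0 - 0) by ring. apply H.
  - intros t _; cbv beta. auto_derive; auto. ring.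
  - intros t _; cbv beta. assert (Hc := COS_bound t). lra.
Qed.

Lemma zcos_le_sin (z : R) : 0 <= z <= PI / 2 -> z * cos z <= sin z.
Proof.
  intros Hz.
  assert (H := incr_of_deriv (fun t => sin t - t * cos t) (fun t => t * sin t) 0 z ltac:(lra)).
  cbv beta in H; rewrite sin_0 in H. cut (0 <= sin z - z * cos z). lra.
  replace 0 with (0 - 0 * cos 0) by ring. apply H.
  - intros t _; cbv beta. auto_derive; auto. ring.
  - intros t Ht; cbv beta. assert (0 <= sin t) by (apply sin_ge_0; lra). nra.
Qed.

Lemma inv_sin2_bounds (z : R) : 0 < z <= PI / 2 ->
  1 / z ^ 2 <= 1 / sin z ^ 2 <= 1 / z ^ 2 + 1.
Proof.
  intros Hz.
  assert (Hs : 0 < sin z) by (apply sin_gt_0; lra).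
  assert (H1 := sin_le_id z ltac:(lra)). assert (H2 := zcos_le_sin z ltac:(lra)).
  assert (Hsc := sin2_cos2 z). unfold Rsqr in Hsc.
  split.
  - unfold Rdiv. rewrite !Rmult_1_l. apply Rinv_le_contravar; nra.
  - assert (Hk : z ^ 2 <= sin z ^ 2 * (1 + z ^ 2)).
    { assert (z ^ 2 * cos z ^ 2 <= sin z ^ 2).
      { assert (0 <= cos z) by (apply cos_ge_0; lra).
        replace (z ^ 2 * cos z ^ 2) with ((z * cos z) ^ 2) by ring. apply pow_incr.
        split; [apply Rmult_le_pos|]; lra. }
      nra. }
    apply (Rmult_le_reg_r (sin z ^ 2 * z ^ 2)); [apply Rmult_lt_0_compat; apply pow_lt; lra|].
    replace (1 / sin z ^ 2 * (sin z ^ 2 * z ^ 2)) with (z ^ 2) by (field; lra).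
    replace ((1 / z ^ 2 + 1) * (sin z ^ 2 * z ^ 2)) with (sin z ^ 2 * (1 + z ^ 2)) by (field; lra). lra.
Qed.


Definition ell (v : R) := ln (1 - exp (- v)).

Lemma exp_pow_INR (y : R) (n : nat) : exp (- y) ^ n = exp (- (y * INR n)).
Proof.
  induction n as [|n IH].
  - simpl. rewrite Rmult_0_r, Ropp_0, exp_0. reflexivity.
  - rewrite <- tech_pow_Rmult, IH, <- exp_plus, S_INR. f_equal. ring.
Qed.

Lemma ell_bounds (v : R) : 0 < v -> - (exp (- v) / (1 - exp (- v))) <= ell v < 0.
Proof.
  intros Hv. unfold ell. assert (H1 := exp_neg_lt1 v Hv). assert (H0 := exp_pos (- v)).
  set (u := exp (- v)) in *. split.
  - assert (Hk : exp (u / (1 - u)) >= 1 / (1 - u)).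
    { assert (H := exp_ineq1_le (u / (1 - u))).
      replace (1 + u / (1 - u)) with (1 / (1 - u)) in H by (field; lra). lra. }
    rewrite <- (ln_exp (- (u / (1 - u)))). apply ln_le.
    + apply exp_pos.
    + rewrite exp_Ropp. apply (Rmult_le_reg_r (exp (u / (1 - u)))); [apply exp_pos|].
      rewrite Rinv_l by (apply Rgt_not_eq, exp_pos).
      apply Rge_le in Hk. unfold Rdiv in Hk. assert ((1 - u) * / (1 - u) = 1) by (field; lra). nra.
  - rewrite <- ln_1. apply ln_increasing; lra.
Qed.

Lemma ex_ell (y b : R) : 0 < y -> 0 < b -> ex_series (fun n => ell (y * (INR n + b))).
Proof.
  intros Hy Hb.
  assert (Hq := exp_neg_lt1 y Hy). assert (Hq0 := exp_pos (- y)).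
  assert (Hc := exp_neg_lt1 (y * b) ltac:(nra)). assert (Hc0 := exp_pos (- (y * b))).
  apply (ex_series_le (K := R_AbsRing) (V := R_CompleteNormedModule) _ (fun n => (exp (- (y * b)) / (1 - exp (- (y * b)))) * exp (- y) ^ n)).
  - intros n. change norm with Rabs.
    assert (HI := pos_INR n).
    assert (Hv : 0 < y * (INR n + b)) by nra.
    destruct (ell_bounds _ Hv) as [Hl Hu].
    rewrite Rabs_left by lra.
    rewrite exp_pow_INR.
    assert (He : exp (- (y * (INR n + b))) = exp (- (y * b)) * exp (- (y * INR n))).
    { rewrite <- exp_plus. f_equal. ring. }
    assert (Hm : exp (- (y * (INR n + b))) <= exp (- (y * b))).
    { destruct (Req_dec (INR n) 0) as [H0|H0].
      - rewrite H0, Rplus_0_l. lra.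
      - apply Rlt_le, exp_increasing. assert (0 < INR n) by lra. nra. }
    assert (0 < exp (- (y * (INR n + b)))) by apply exp_pos.
    assert (Hd : exp (- (y * (INR n + b))) / (1 - exp (- (y * (INR n + b))))
             <= exp (- (y * (INR n + b))) / (1 - exp (- (y * b)))).
    { unfold Rdiv. apply Rmult_le_compat_l; [lra|]. apply Rinv_le_contravar; lra. }
    rewrite He in Hd, Hl. 
    replace (exp (- (y * b)) / (1 - exp (- (y * b))) * exp (- (y * INR n)))
      with (exp (- (y * b)) * exp (- (y * INR n)) / (1 - exp (- (y * b)))) by (field; lra).
    lra.
  - apply (ex_series_scal_l (V := R_NormedModule)). apply ex_series_geom. rewrite Rabs_pos_eq; lra.
Qed.

Definition Fs (b y : R) := Series (fun n => ell (y * (INR n + b)) + ell (y * (INR n + 1 - b))).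
Definition Rr (b y : R) := Fs b y - ln (2 * sin (b * PI)) + PI ^ 2 / (3 * y).

Lemma ex_Fs (b y : R) : 0 < y -> 0 < b < 1 ->
  ex_series (fun n => ell (y * (INR n + b)) + ell (y * (INR n + 1 - b))).
Proof.
  intros Hy Hb.
  apply (ex_series_plus (V := R_NormedModule)).
  - apply ex_ell; lra.
  - apply (ex_series_ext (fun n => ell (y * (INR n + (1 - b))))).
    + intros n. f_equal. f_equal. ring.
    + apply ex_ell; lra.
Qed.

Lemma Fs_sym (b y : R) : Fs (1 - b) y = Fs b y.
Proof.
  unfold Fs. apply Series_ext. intros n.
  rewrite Rplus_comm. f_equal; f_equal; f_equal; ring.
Qed.

Lemma Rr_sym (b y : R) : Rr (1 - b) y = Rr b y.
Proof.
  unfold Rr. rewrite Fs_sym.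
  replace ((1 - b) * PI) with (PI - b * PI) by ring. rewrite sin_PI_x. reflexivity.
Qed.

Lemma is_series_pairs (a : nat -> R) (l : R) : is_series a l ->
  is_series (fun n => a (2 * n)%nat + a (S (2 * n))) l.
Proof.
  intros H.
  assert (Hs : forall N, sum_n (fun n => a (2 * n)%nat + a (S (2 * n))) N = sum_n a (S (2 * N))).
  { induction N as [|N IH].
    - rewrite sum_O. replace (S (2 * 0)) with 1%nat by lia. rewrite sum_Sn, sum_O. reflexivity.
    - rewrite sum_Sn, IH. replace (S (2 * S N)) with (S (S (S (2 * N)))) by lia.
      rewrite !sum_Sn. replace (2 * S N)%nat with (S (S (2 * N))) by lia.
      unfold plus; simpl; ring. }
  unfold is_series.
  apply (filterlim_ext (fun N => sum_n a (S (2 * N)))).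
  - intros N. rewrite Hs. reflexivity.
  - change (is_lim_seq (fun N => sum_n a (S (2 * N))) l).
    apply (is_lim_seq_subseq (sum_n a) l (fun N => S (2 * N))).
    + intros P [N HN]. exists N. intros n Hn. apply HN. lia.
    + exact H.
Qed.

Lemma Fs_rel (b x : R) : 0 < x -> 0 < b < 1 ->
  Fs b x = Fs (b / 2) (2 * x) + Fs ((b + 1) / 2) (2 * x).
Proof.
  intros Hx Hb.
  assert (H := is_series_pairs _ _ (Series_correct _ (ex_Fs b x Hx Hb))).
  unfold Fs at 2 3. rewrite <- Series_plus.
  2: apply ex_Fs; lra.
  2: apply ex_Fs; lra.
  symmetry. apply is_series_unique.
  eapply is_series_ext; [| exact H].
  intros n. cbv beta. rewrite ?S_INR, ?mult_INR. simpl (INR 2).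
  match goal with |- ?l = ?r => change (@eq R l r) end.
  replace (1 + 1) with 2 by ring.
  replace (ell (2 * x * (INR n + 1 - b / 2))) with (ell (x * (2 * INR n + 1 + 1 - b))) by (f_equal; field).
  replace (ell (2 * x * (INR n + b / 2))) with (ell (x * (2 * INR n + b))) by (f_equal; field).
  replace (ell (2 * x * (INR n + (b + 1) / 2))) with (ell (x * (2 * INR n + 1 + b))) by (f_equal; field).
  replace (ell (2 * x * (INR n + 1 - (b + 1) / 2))) with (ell (x * (2 * INR n + 1 - b))) by (f_equal; field).
  ring.
Qed.

Lemma sin_pos01 (b : R) : 0 < b < 1 -> 0 < sin (b * PI).
Proof. intros Hb. apply sin_gt_0; assert (Hp := PI_RGT_0); nra. Qed.

Lemma Rr_rel (b x : R) : 0 < x -> 0 < b < 1 ->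
  Rr b x = Rr (b / 2) (2 * x) + Rr ((b + 1) / 2) (2 * x).
Proof.
  intros Hx Hb. unfold Rr. rewrite (Fs_rel b x Hx Hb).
  assert (Hs1 : 0 < sin (b / 2 * PI)) by (apply sin_pos01; lra).
  assert (Hc : sin ((b + 1) / 2 * PI) = cos (b / 2 * PI)).
  { rewrite cos_sin. f_equal. field. }
  assert (Hc1 : 0 < cos (b / 2 * PI)) by (rewrite <- Hc; apply sin_pos01; lra).
  assert (Hs : sin (b * PI) = 2 * sin (b / 2 * PI) * cos (b / 2 * PI)).
  { rewrite <- sin_2a. f_equal. field. }
  rewrite Hc, Hs.
  replace (2 * (2 * sin (b / 2 * PI) * cos (b / 2 * PI))) with ((2 * sin (b / 2 * PI)) * (2 * cos (b / 2 * PI))) by ring.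
  rewrite ln_mult by lra.
  field. lra.
Qed.


Definition e1 (v : R) := exp (- v) / (1 - exp (- v)).

Lemma d_ell (v : R) : 0 < v -> is_derive ell v (e1 v).
Proof.
  intros Hv. assert (H := exp_neg_lt1 v Hv). unfold ell, e1.
  auto_derive; [lra|]. field. lra.
Qed.

Lemma d_e1 (v : R) : 0 < v -> is_derive e1 v (- E v).
Proof.
  intros Hv. assert (H := exp_neg_lt1 v Hv). unfold e1, E.
  auto_derive; [lra|]. field. lra.
Qed.

Lemma is_derive_aff (phi g : R -> R) (c k s d : R) :
  (forall t, g t = c + k * t) -> is_derive phi (g s) d -> is_derive (fun t => phi (g t)) s (k * d).
Proof.
  intros Hg H. rewrite Hg in H. apply is_derive_lin in H.
  eapply is_derive_ext; [| exact H]. intros t; simpl. rewrite Hg. reflexivity.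
Qed.

Definition phi0 (y t : R) := ell (y * t) + ell (y * (1 - t)) - ln (2 * sin (t * PI)).
Definition phi0' (y t : R) := y * e1 (y * t) - y * e1 (y * (1 - t)) - PI * cos (t * PI) / sin (t * PI).
Definition phi0'' (y t : R) := - (y ^ 2 * E (y * t)) - y ^ 2 * E (y * (1 - t)) + PI ^ 2 / sin (t * PI) ^ 2.

Lemma d_phi0 (y t : R) : 0 < y -> 0 < t < 1 -> is_derive (phi0 y) t (phi0' y t).
Proof.
  intros Hy Ht. assert (Hs := sin_pos01 t Ht). unfold phi0, phi0'.
  apply (is_derive_minus (fun t => ell (y * t) + ell (y * (1 - t)))).
  apply (is_derive_plus (fun t => ell (y * t))).
  - apply (is_derive_aff ell (fun t => y * t) 0 y). intros; ring. apply d_ell; nra.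
  - replace (- (y * e1 (y * (1 - t)))) with ((- y) * e1 (y * (1 - t))) by ring.
    apply (is_derive_aff ell (fun t => y * (1 - t)) y (- y)). intros; ring. apply d_ell; nra.
  - auto_derive; [lra|]. field. lra.
Qed.


Lemma d_phi0' (y t : R) : 0 < y -> 0 < t < 1 -> is_derive (phi0' y) t (phi0'' y t).
Proof.
  intros Hy Ht. assert (Hs := sin_pos01 t Ht). unfold phi0', phi0''.
  assert (H1 : is_derive (fun t => y * e1 (y * t)) t (y * (y * (- E (y * t))))).
  { apply is_derive_scal.
    apply (is_derive_aff e1 (fun t => y * t) 0 y). intros; ring. apply d_e1; nra. }
  assert (H2 : is_derive (fun t => y * e1 (y * (1 - t))) t (y * ((- y) * (- E (y * (1 - t)))))).
  { apply is_derive_scal.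
    apply (is_derive_aff e1 (fun t => y * (1 - t)) y (- y)). intros; ring. apply d_e1; nra. }
  assert (H3 : is_derive (fun t => PI * cos (t * PI) / sin (t * PI)) t (- (PI ^ 2 / sin (t * PI) ^ 2))).
  { auto_derive; [lra|]. assert (Hsc := sin2_cos2 (t * PI)). unfold Rsqr in Hsc.
    transitivity (- (PI ^ 2 * (sin (t * PI) * sin (t * PI) + cos (t * PI) * cos (t * PI))) / sin (t * PI) ^ 2).
    - field. lra.
    - rewrite Hsc. field. lra. }
  eapply is_derive_eq.
  - apply (is_derive_minus (fun t => y * e1 (y * t) - y * e1 (y * (1 - t)))); [|exact H3].
    apply (is_derive_minus (fun t => y * e1 (y * t))); [exact H1|exact H2].
  - unfold minus, plus, opp; simpl. ring.
Qed.

Lemma yE_bounds (y w : R) : 0 < y -> 0 < w ->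
  1 / w ^ 2 - y ^ 2 / 4 <= y ^ 2 * E (y * w) <= 1 / w ^ 2.
Proof.
  intros Hy Hw. assert (Hv : 0 < y * w) by nra.
  assert (H1 := E_le _ Hv). assert (H2 := E_ge _ Hv).
  assert (Hk : y ^ 2 * (1 / (y * w) ^ 2) = 1 / w ^ 2) by (field; lra).
  assert (0 < y ^ 2) by nra.
  split.
  - apply (Rmult_le_compat_l (y ^ 2)) in H2; [|lra]. nra.
  - apply (Rmult_le_compat_l (y ^ 2)) in H1; [|lra]. nra.
Qed.

Lemma PI_gt3 : 3 < PI.
Proof. assert (H := PI2_3_2). lra. Qed.

Lemma phi0''_half (y t : R) : 1 <= y <= 2 -> 0 < t <= 1 / 2 -> Rabs (phi0'' y t) <= 18.
Proof.
  intros Hy Ht. unfold phi0''.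
  assert (Ha := yE_bounds y t ltac:(lra) ltac:(lra)).
  assert (Hb := yE_bounds y (1 - t) ltac:(lra) ltac:(lra)).
  assert (HP := PI_RGT_0). assert (HP4 := PI_4).
  assert (Hz : 0 < t * PI <= PI / 2) by nra.
  destruct (inv_sin2_bounds _ Hz) as [Hs1 Hs2].
  assert (Hk : PI ^ 2 * (1 / (t * PI) ^ 2) = 1 / t ^ 2) by (field; lra).
  assert (Hs : PI ^ 2 / sin (t * PI) ^ 2 = PI ^ 2 * (1 / sin (t * PI) ^ 2)) by (unfold Rdiv; ring).
  assert (0 < PI ^ 2) by nra.
  assert (L1 : 1 / t ^ 2 <= PI ^ 2 / sin (t * PI) ^ 2).
  { rewrite Hs, <- Hk. apply Rmult_le_compat_l; lra. }
  assert (L2 : PI ^ 2 / sin (t * PI) ^ 2 <= 1 / t ^ 2 + PI ^ 2).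
  { rewrite Hs, <- Hk. replace (PI ^ 2 * (1 / (t * PI) ^ 2) + PI ^ 2) with (PI ^ 2 * (1 / (t * PI) ^ 2 + 1)) by ring.
    apply Rmult_le_compat_l; lra. }
  assert (L3 : 1 / (1 - t) ^ 2 <= 4).
  { unfold Rdiv. rewrite Rmult_1_l. replace 4 with (/ (1/2) ^ 2) by field. apply Rinv_le_contravar; [nra|].
    apply pow_incr; lra. }
  assert (0 <= 1 / (1 - t) ^ 2) by (apply Rlt_le, Rdiv_lt_0_compat; [lra| apply pow_lt; lra]).
  assert (PI ^ 2 <= 16) by nra.
  assert (y ^ 2 <= 4) by nra.
  apply Rabs_le_between. split; lra.
Qed.

Lemma phi0''_sym (y t : R) : phi0'' y (1 - t) = phi0'' y t.
Proof.
  unfold phi0''. replace ((1 - t) * PI) with (PI - t * PI) by ring. rewrite sin_PI_x.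
  replace (1 - (1 - t)) with t by ring. ring.
Qed.

Lemma phi0''_bound (y t : R) : 1 <= y <= 2 -> 0 < t < 1 -> Rabs (phi0'' y t) <= 18.
Proof.
  intros Hy Ht. destruct (Rle_lt_dec t (1/2)).
  - apply phi0''_half; lra.
  - rewrite <- phi0''_sym. apply phi0''_half; lra.
Qed.


Ltac cont_tac := intros; apply (@ex_derive_continuous R_AbsRing R_NormedModule); auto_derive; auto.

Definition Ai (n : nat) : R := RInt (fun t => cos t ^ (2 * n)) 0 (PI / 2).
Definition Bi (n : nat) : R := RInt (fun t => t ^ 2 * cos t ^ (2 * n)) 0 (PI / 2).

Lemma ex_A (n : nat) : ex_RInt (fun t => cos t ^ (2 * n)) 0 (PI / 2).
Proof. apply (ex_RInt_continuous (V := R_CompleteNormedModule)). cont_tac. Qed.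
Lemma ex_B (n : nat) : ex_RInt (fun t => t ^ 2 * cos t ^ (2 * n)) 0 (PI / 2).
Proof. apply (ex_RInt_continuous (V := R_CompleteNormedModule)). cont_tac. Qed.
Lemma is_A (n : nat) : is_RInt (fun t => cos t ^ (2 * n)) 0 (PI / 2) (Ai n).
Proof. apply (RInt_correct (V := R_CompleteNormedModule)), ex_A. Qed.
Lemma is_B (n : nat) : is_RInt (fun t => t ^ 2 * cos t ^ (2 * n)) 0 (PI / 2) (Bi n).
Proof. apply (RInt_correct (V := R_CompleteNormedModule)), ex_B. Qed.

Lemma two_S (n : nat) : (2 * S n = S (S (2 * n)))%nat.
Proof. lia. Qed.

Lemma d_cpow (m : nat) (t : R) : is_derive (fun t => cos t ^ S m) t (INR (S m) * (- sin t) * cos t ^ m).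
Proof.
  apply (is_derive_pow cos (S m) t (- sin t)). auto_derive; auto. ring.
Qed.

Lemma d_mult (f g : R -> R) (x df dg : R) : is_derive f x df -> is_derive g x dg ->
  is_derive (fun t => f t * g t) x (df * g x + f x * dg).
Proof.
  intros Hf Hg. apply (is_derive_mult f g x df dg Hf Hg). intros; apply Rmult_comm.
Qed.

Lemma cos_PI2_pow (m : nat) : cos (PI / 2) ^ S m = 0.
Proof. rewrite cos_PI2. simpl. ring. Qed.

Lemma is_RInt_zero_of (F f : R -> R) :
  (forall t, is_derive F t (f t)) -> (forall t, continuous f t) -> F (PI / 2) = 0 -> F 0 = 0 ->
  is_RInt f 0 (PI / 2) 0.
Proof.
  intros Hd Hc H1 H0.
  assert (H := is_RInt_derive (V := R_CompleteNormedModule) F f 0 (PI / 2) (fun t _ => Hd t) (fun t _ => Hc t)).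
  assert (E : (0:R) = minus (F (PI/2)) (F 0)) by (rewrite H1, H0; unfold minus, plus, opp; simpl; ring).
  rewrite E at 2. exact H.
Qed.

Lemma A_gen (m : nat) :
  is_RInt (fun t => (INR m + 2) * cos t ^ S (S m) - (INR m + 1) * cos t ^ m) 0 (PI / 2) 0.
Proof.
  apply (is_RInt_zero_of (fun t => cos t ^ S m * sin t)).
  - intros t. eapply is_derive_eq.
    + apply d_mult; [apply d_cpow|]. auto_derive; auto.
    + rewrite S_INR. assert (Hsc := sin2_cos2 t). unfold Rsqr in Hsc. cbn [pow].
      replace (sin t * sin t) with (1 - cos t * cos t) by lra.
      transitivity ((INR m + 1) * (- (sin t * sin t)) * cos t ^ m + cos t ^ m * cos t * cos t * 1).
      * ring.
      * replace (sin t * sin t) with (1 - cos t * cos t) by lra. ring.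
  - cont_tac.
  - rewrite cos_PI2_pow. ring.
  - rewrite sin_0. ring.
Qed.

Lemma B_gen (m : nat) :
  is_RInt (fun t => cos t ^ S (S m) + (INR m + 2) / 2 * (t ^ 2 * ((INR m + 2) * cos t ^ S (S m) - (INR m + 1) * cos t ^ m))) 0 (PI / 2) 0.
Proof.
  apply (is_RInt_zero_of (fun t => t * cos t ^ S (S m) + (INR m + 2) / 2 * (t ^ 2 * sin t * cos t ^ S m))).
  - intros t. eapply is_derive_eq.
    + apply (is_derive_plus (fun t => t * cos t ^ S (S m))).
      * apply d_mult; [| apply d_cpow]. auto_derive; auto.
      * apply is_derive_scal. apply d_mult; [| apply d_cpow]. auto_derive; auto.
    + change (plus ?a ?b) with (Rplus a b). rewrite !S_INR. assert (Hsc := sin2_cos2 t). unfold Rsqr in Hsc. cbn [pow].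
      transitivity (cos t * (cos t * cos t ^ m) + (INR m + 2) / 2 * (t * t * ((INR m + 2) * (cos t * (cos t * cos t ^ m)) - (INR m + 1) * (sin t * sin t + cos t * cos t) * cos t ^ m))).
      * field.
      * rewrite Hsc. ring.
  - cont_tac.
  - rewrite !cos_PI2_pow. ring.
  - ring.
Qed.

Lemma is_RInt_lin2 (f g : R -> R) (a b If Ig c d : R) :
  is_RInt f a b If -> is_RInt g a b Ig -> is_RInt (fun t => c * f t - d * g t) a b (c * If - d * Ig).
Proof.
  intros Hf Hg.
  apply (is_RInt_minus (V := R_NormedModule) (fun t => c * f t) (fun t => d * g t)).
  - apply (is_RInt_scal (V := R_NormedModule)). exact Hf.
  - apply (is_RInt_scal (V := R_NormedModule)). exact Hg.
Qed.

Lemma is_RInt_unique_R (f : R -> R) (a b l1 l2 : R) : is_RInt f a b l1 -> is_RInt f a b l2 -> l1 = l2.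
Proof.
  intros H1 H2. rewrite <- (is_RInt_unique (V := R_CompleteNormedModule) f a b l1 H1).
  exact (is_RInt_unique (V := R_CompleteNormedModule) f a b l2 H2).
Qed.

Lemma INR2n (n : nat) : INR (2 * n) = 2 * INR n.
Proof. rewrite mult_INR. simpl. ring. Qed.

Lemma is_A' (n : nat) : is_RInt (fun t => cos t ^ S (S (2 * n))) 0 (PI / 2) (Ai (S n)).
Proof. rewrite <- two_S. apply is_A. Qed.

Lemma is_B' (n : nat) : is_RInt (fun t => t ^ 2 * cos t ^ S (S (2 * n))) 0 (PI / 2) (Bi (S n)).
Proof. rewrite <- two_S. apply is_B. Qed.

Lemma A_rec (n : nat) : (2 * INR n + 2) * Ai (S n) = (2 * INR n + 1) * Ai n.
Proof.
  assert (H := A_gen (2 * n)).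
  assert (L := is_RInt_lin2 _ _ 0 (PI / 2) _ _ (INR (2 * n) + 2) (INR (2 * n) + 1) (is_A' n) (is_A n)).
  assert (E := is_RInt_unique_R _ _ _ _ _ H L). rewrite INR2n in E. lra.
Qed.

Lemma B_rel (n : nat) :
  Ai (S n) + 2 * (INR n + 1) ^ 2 * Bi (S n) - (INR n + 1) * (2 * INR n + 1) * Bi n = 0.
Proof.
  assert (H := B_gen (2 * n)).
  assert (L1 := is_RInt_lin2 _ _ 0 (PI / 2) _ _ ((INR (2 * n) + 2) / 2 * (INR (2 * n) + 2)) ((INR (2 * n) + 2) / 2 * (INR (2 * n) + 1)) (is_B' n) (is_B n)).
  assert (L := is_RInt_plus (V := R_NormedModule) _ _ 0 (PI / 2) _ _ (is_A' n) L1).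
  assert (L' : is_RInt (fun t => cos t ^ S (S (2 * n)) + (INR (2 * n) + 2) / 2 * (t ^ 2 * ((INR (2 * n) + 2) * cos t ^ S (S (2 * n)) - (INR (2 * n) + 1) * cos t ^ (2 * n)))) 0 (PI / 2)
     (Ai (S n) + ((INR (2 * n) + 2) / 2 * (INR (2 * n) + 2) * Bi (S n) - (INR (2 * n) + 2) / 2 * (INR (2 * n) + 1) * Bi n))).
  { eapply is_RInt_ext; [| exact L]. intros t _.
    match goal with |- ?l = ?r => change (@eq R l r) end.
    repeat change (plus ?a ?b) with (Rplus a b). cbv beta. ring. }
  assert (E := is_RInt_unique_R _ _ _ _ _ H L'). rewrite INR2n in E.
  etransitivity; [|symmetry; exact E]. field.
Qed.

Lemma A0 : Ai 0 = PI / 2.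
Proof.
  assert (H := is_RInt_derive (V := R_CompleteNormedModule) (fun t => t) (fun _ => 1) 0 (PI / 2)).
  assert (H1 : is_RInt (fun t => cos t ^ (2 * 0)) 0 (PI / 2) (minus (PI / 2) 0)).
  { eapply is_RInt_ext; [| apply H].
    - intros; reflexivity.
    - intros; auto_derive; auto.
    - intros. apply continuous_const. }
  rewrite (is_RInt_unique_R _ _ _ _ _ (is_A 0) H1). unfold minus, plus, opp; simpl; ring.
Qed.

Lemma B0 : Bi 0 = (PI / 2) ^ 3 / 3.
Proof.
  assert (H := is_RInt_derive (V := R_CompleteNormedModule) (fun t => t ^ 3 / 3) (fun t => t ^ 2 * cos t ^ (2 * 0)) 0 (PI / 2)).
  assert (H1 : is_RInt (fun t => t ^ 2 * cos t ^ (2 * 0)) 0 (PI / 2) (minus ((PI / 2) ^ 3 / 3) (0 ^ 3 / 3))).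
  { apply H.
    - intros; auto_derive; auto. simpl. field.
    - cont_tac. }
  rewrite (is_RInt_unique_R _ _ _ _ _ (is_B 0) H1). unfold minus, plus, opp; simpl; field.
Qed.

Lemma cos_lb (t : R) : 0 <= t -> 1 - t ^ 2 / 2 <= cos t.
Proof.
  intros Ht.
  assert (H := incr_of_deriv (fun s => cos s - 1 + s ^ 2 / 2) (fun s => - sin s + s) 0 t Ht).
  cbv beta in H. rewrite cos_0 in H.
  cut (0 <= cos t - 1 + t ^ 2 / 2). lra.
  replace 0 with (1 - 1 + 0 ^ 2 / 2) by (simpl; field). apply H.
  - intros s _. auto_derive; auto. field.
  - intros s Hs. assert (X := sin_le_id s ltac:(lra)). lra.
Qed.

Lemma sin_lb3 (t : R) : 0 <= t -> t - t ^ 3 / 6 <= sin t.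
Proof.
  intros Ht.
  assert (H := incr_of_deriv (fun s => sin s - s + s ^ 3 / 6) (fun s => cos s - 1 + s ^ 2 / 2) 0 t Ht).
  cbv beta in H. rewrite sin_0 in H.
  cut (0 <= sin t - t + t ^ 3 / 6). lra.
  replace 0 with (0 - 0 + 0 ^ 3 / 6) by (simpl; field). apply H.
  - intros s _. auto_derive; auto. field.
  - intros s Hs. assert (X := cos_lb s ltac:(lra)). lra.
Qed.

Lemma t2_le_sin2 (t : R) : 0 <= t <= PI / 2 -> t ^ 2 <= 9 * sin t ^ 2.
Proof.
  intros Ht. assert (HP := PI_4). assert (X := sin_lb3 t ltac:(lra)).
  assert (t ^ 2 <= 4) by nra.
  assert (t / 3 <= sin t) by nra.
  assert (0 <= t / 3) by lra.
  assert ((t / 3) ^ 2 <= sin t ^ 2) by (apply pow_incr; lra).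
  nra.
Qed.

Lemma B_bounds (n : nat) : 0 <= Bi n <= 9 * (Ai n - Ai (S n)).
Proof.
  split.
  - assert (Z := is_RInt_lin2 _ _ 0 (PI / 2) _ _ 0 0 (is_A n) (is_A n)).
    replace 0 with (0 * Ai n - 0 * Ai n) at 1 by ring.
    apply (is_RInt_le _ _ 0 (PI / 2) _ _ ltac:(assert (HP := PI_RGT_0); lra) Z (is_B n)).
    intros t Ht. cbv beta. assert (0 <= t ^ 2) by nra.
    assert (0 <= cos t ^ (2 * n)) by (rewrite pow_mult; apply pow_le; nra). nra.
  - assert (L := is_RInt_lin2 _ _ 0 (PI / 2) _ _ 9 9 (is_A n) (is_A' n)).
    replace (9 * (Ai n - Ai (S n))) with (9 * Ai n - 9 * Ai (S n)) by ring.
    apply (is_RInt_le _ _ 0 (PI / 2) _ _ ltac:(assert (HP := PI_RGT_0); lra) (is_B n) L).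
    intros t Ht. cbv beta.
    assert (X := t2_le_sin2 t ltac:(lra)).
    assert (Hsc := sin2_cos2 t). unfold Rsqr in Hsc.
    assert (0 <= cos t ^ (2 * n)) by (rewrite pow_mult; apply pow_le; nra).
    replace (cos t ^ S (S (2 * n))) with (cos t ^ (2 * n) * (cos t * cos t)) by (simpl; ring).
    replace (sin t ^ 2) with (sin t * sin t) in X by ring.
    nra.
Qed.

Lemma A_pos (n : nat) : 0 < Ai n.
Proof.
  induction n as [|n IH].
  - rewrite A0. assert (HP := PI_RGT_0). lra.
  - assert (H := A_rec n). assert (HI := pos_INR n).
    apply (Rmult_lt_reg_l (2 * INR n + 2)); [lra|]. rewrite H. nra.
Qed.

Definition Qs (n : nat) := 2 * Bi n / Ai n.

Lemma Q_tel (n : nat) : 1 / (INR n + 1) ^ 2 = Qs n - Qs (S n).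
Proof.
  unfold Qs. assert (H1 := A_rec n). assert (H2 := B_rel n).
  assert (P0 := A_pos n). assert (P1 := A_pos (S n)). assert (HI := pos_INR n).
  assert (EA : @eq R (Ai n) ((2 * INR n + 2) / (2 * INR n + 1) * Ai (S n))) by (field_simplify_eq; lra).
  assert (EB : @eq R (Bi (S n)) (((INR n + 1) * (2 * INR n + 1) * Bi n - Ai (S n)) / (2 * (INR n + 1) ^ 2))).
  { field_simplify_eq; [lra|]. nra. }
  rewrite EA, EB. field. repeat split; lra.
Qed.

Lemma Q_bound (n : nat) : 0 <= Qs n <= 9 / (INR n + 1).
Proof.
  unfold Qs. assert (H1 := A_rec n). assert (B := B_bounds n).
  assert (P0 := A_pos n). assert (HI := pos_INR n).
  assert (EA : Ai n - Ai (S n) = Ai n / (2 * INR n + 2)).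
  { apply (Rmult_eq_reg_l (2 * INR n + 2)); [|lra]. field_simplify; [|lra]. lra. }
  split.
  - apply Rdiv_le_0_compat; lra.
  - rewrite EA in B. apply (Rmult_le_reg_r (Ai n)); [lra|].
    replace (2 * Bi n / Ai n * Ai n) with (2 * Bi n) by (field; lra).
    replace (9 / (INR n + 1) * Ai n) with (18 * (Ai n / (2 * INR n + 2))) by (field; lra). lra.
Qed.

Lemma basel : is_series (fun n => 1 / (INR n + 1) ^ 2) (PI ^ 2 / 6).
Proof.
  assert (Hs : forall N, sum_n (fun n => 1 / (INR n + 1) ^ 2) N = Qs 0 - Qs (S N)).
  { induction N as [|N IH].
    - rewrite sum_O. apply Q_tel.
    - rewrite sum_Sn, IH. change (plus ?a ?b) with (Rplus a b). rewrite (Q_tel (S N)). match goal with |- ?l = ?r => change (@eq R l r) end. ring. }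
  assert (HQ0 : Qs 0 = PI ^ 2 / 6).
  { unfold Qs. rewrite A0, B0. assert (HP := PI_RGT_0). match goal with |- ?l = ?r => change (@eq R l r) end. field. lra. }
  unfold is_series. change (is_lim_seq (sum_n (fun n => 1 / (INR n + 1) ^ 2)) (PI ^ 2 / 6)).
  apply (is_lim_seq_le_le (fun N => PI ^ 2 / 6 - 9 * / (INR N + 2)) _ (fun _ => PI ^ 2 / 6)).
  - intros N. rewrite Hs, HQ0. destruct (Q_bound (S N)) as [A B]. rewrite S_INR in B.
    replace (INR N + 1 + 1) with (INR N + 2) in B by ring. unfold Rdiv in B. lra.
  - replace (Finite (PI ^ 2 / 6)) with (Finite (PI ^ 2 / 6 - 9 * 0)) by (f_equal; ring).
    apply is_lim_seq_minus'; [apply is_lim_seq_const|].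
    apply (is_lim_seq_scal_l _ 9 0).
    replace (Finite 0) with (Rbar_inv p_infty) by reflexivity.
    apply is_lim_seq_inv; [| discriminate].
    eapply is_lim_seq_plus; [apply is_lim_seq_INR | apply is_lim_seq_const |]. simpl. reflexivity.
  - apply is_lim_seq_const.
Qed.


Definition psi (y : R) (n : nat) (t : R) := ell (y * (INR n + 1 + t)) + ell (y * (INR n + 2 - t)).
Definition psi' (y : R) (n : nat) (t : R) := y * e1 (y * (INR n + 1 + t)) - y * e1 (y * (INR n + 2 - t)).
Definition psi'' (y : R) (n : nat) (t : R) := - (y ^ 2 * E (y * (INR n + 1 + t))) - y ^ 2 * E (y * (INR n + 2 - t)).

Lemma d_psi (y : R) n t : 0 < y -> 0 < t < 1 -> is_derive (psi y n) t (psi' y n t).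
Proof.
  intros Hy Ht. assert (HI := pos_INR n). unfold psi, psi'.
  eapply is_derive_eq.
  - apply (is_derive_plus (fun t => ell (y * (INR n + 1 + t)))).
    + apply (is_derive_aff ell (fun t => y * (INR n + 1 + t)) (y * (INR n + 1)) y). intros; ring. apply d_ell; nra.
    + apply (is_derive_aff ell (fun t => y * (INR n + 2 - t)) (y * (INR n + 2)) (- y)). intros; ring. apply d_ell; nra.
  - unfold plus; simpl. ring.
Qed.

Lemma d_psi' (y : R) n t : 0 < y -> 0 < t < 1 -> is_derive (psi' y n) t (psi'' y n t).
Proof.
  intros Hy Ht. assert (HI := pos_INR n). unfold psi', psi''.
  eapply is_derive_eq.
  - apply (is_derive_minus (fun t => y * e1 (y * (INR n + 1 + t)))).
    + apply is_derive_scal.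
      apply (is_derive_aff e1 (fun t => y * (INR n + 1 + t)) (y * (INR n + 1)) y). intros; ring. apply d_e1; nra.
    + apply is_derive_scal.
      apply (is_derive_aff e1 (fun t => y * (INR n + 2 - t)) (y * (INR n + 2)) (- y)). intros; ring. apply d_e1; nra.
  - unfold minus, plus, opp; simpl. ring.
Qed.

Lemma psi''_bound (y : R) n t : 1 <= y <= 2 -> 0 < t < 1 -> Rabs (psi'' y n t) <= 2 * (1 / (INR n + 1) ^ 2).
Proof.
  intros Hy Ht. assert (HI := pos_INR n). unfold psi''.
  destruct (yE_bounds y (INR n + 1 + t) ltac:(lra) ltac:(lra)) as [_ H1].
  destruct (yE_bounds y (INR n + 2 - t) ltac:(lra) ltac:(lra)) as [_ H2].
  assert (0 <= y ^ 2 * E (y * (INR n + 1 + t))).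
  { apply Rmult_le_pos; [nra|]. unfold E. apply Rmult_le_pos; [apply Rlt_le, exp_pos|].
    apply Rlt_le, Rinv_0_lt_compat. apply pow_lt. assert (Hq := exp_neg_lt1 (y * (INR n + 1 + t)) ltac:(nra)). lra. }
  assert (0 <= y ^ 2 * E (y * (INR n + 2 - t))).
  { apply Rmult_le_pos; [nra|]. unfold E. apply Rmult_le_pos; [apply Rlt_le, exp_pos|].
    apply Rlt_le, Rinv_0_lt_compat. apply pow_lt. assert (Hq := exp_neg_lt1 (y * (INR n + 2 - t)) ltac:(nra)). lra. }
  assert (1 / (INR n + 1 + t) ^ 2 <= 1 / (INR n + 1) ^ 2).
  { unfold Rdiv. rewrite !Rmult_1_l. apply Rinv_le_contravar; [apply pow_lt; lra|]. apply pow_incr; lra. }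
  assert (1 / (INR n + 2 - t) ^ 2 <= 1 / (INR n + 1) ^ 2).
  { unfold Rdiv. rewrite !Rmult_1_l. apply Rinv_le_contravar; [apply pow_lt; lra|]. apply pow_incr; lra. }
  apply Rabs_le_between. split; lra.
Qed.

Lemma ex_psi (y t : R) : 0 < y -> 0 < t < 1 -> ex_series (fun n => psi y n t).
Proof.
  intros Hy Ht. assert (H := ex_Fs t y Hy Ht).
  apply ex_series_incr_1 in H.
  eapply ex_series_ext; [| exact H]. intros n. cbv beta. unfold psi. rewrite S_INR.
  f_equal; f_equal; ring.
Qed.

Lemma Fs_split (y t : R) : 0 < y -> 0 < t < 1 ->
  Fs t y = ell (y * t) + ell (y * (1 - t)) + Series (fun n => psi y n t).
Proof.
  intros Hy Ht. unfold Fs. rewrite Series_incr_1 by (apply ex_Fs; auto).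
  simpl (INR 0). f_equal.
  - f_equal; f_equal; ring.
  - apply Series_ext. intros n. unfold psi. rewrite S_INR. f_equal; f_equal; ring.
Qed.

Lemma Rr_split (y t : R) : 0 < y -> 0 < t < 1 ->
  Rr t y = phi0 y t + Series (fun n => psi y n t) + PI ^ 2 / (3 * y).
Proof.
  intros Hy Ht. unfold Rr, phi0. rewrite Fs_split by auto. ring.
Qed.

Lemma T_sd (y m h : R) : 1 <= y <= 2 -> 0 <= h -> 0 < m - h -> m + h < 1 ->
  Rabs (Series (fun n => psi y n (m + h)) + Series (fun n => psi y n (m - h))
        - 2 * Series (fun n => psi y n m)) <= (PI ^ 2 / 3) * h ^ 2.
Proof.
  intros Hy Hh H1 H2.
  assert (E1 := ex_psi y (m + h) ltac:(lra) ltac:(lra)).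
  assert (E2 := ex_psi y (m - h) ltac:(lra) ltac:(lra)).
  assert (E3 := ex_psi y m ltac:(lra) ltac:(lra)).
  set (d := fun n => psi y n (m + h) + psi y n (m - h) - 2 * psi y n m).
  assert (Hd : forall n, Rabs (d n) <= 2 * (1 / (INR n + 1) ^ 2) * h ^ 2).
  { intros n. unfold d.
    apply (second_diff (psi y n) (psi' y n) (psi'' y n) 0 1); auto.
    - intros t Ht. apply d_psi; lra.
    - intros t Ht. apply d_psi'; lra.
    - intros t Ht. apply psi''_bound; lra. }
  assert (Hb : is_series (fun n => 2 * (1 / (INR n + 1) ^ 2) * h ^ 2) (2 * (PI ^ 2 / 6) * h ^ 2)).
  { apply (is_series_scal_r (h ^ 2)). apply (is_series_scal_l (V := R_NormedModule) 2 _ _ basel). }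
  replace (Series (fun n => psi y n (m + h)) + Series (fun n => psi y n (m - h))
        - 2 * Series (fun n => psi y n m)) with (Series d).
  2: { unfold d. rewrite Series_minus, Series_plus, Series_scal_l; auto.
       - apply (ex_series_plus (V := R_NormedModule)); auto.
       - apply (ex_series_scal_l (V := R_NormedModule)); auto. }
  assert (Ea : ex_series (fun n => Rabs (d n))).
  { apply (ex_series_le (K := R_AbsRing) (V := R_CompleteNormedModule) _ (fun n => 2 * (1 / (INR n + 1) ^ 2) * h ^ 2)).
    - intros n. change norm with Rabs. rewrite Rabs_Rabsolu. apply Hd.
    - eexists; exact Hb. }
  eapply Rle_trans; [apply Series_Rabs; exact Ea|].
  eapply Rle_trans; [apply (Series_le _ (fun n => 2 * (1 / (INR n + 1) ^ 2) * h ^ 2))|].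
  - intros n. split; [apply Rabs_pos| apply Hd].
  - eexists; exact Hb.
  - rewrite (is_series_unique _ _ Hb). lra.
Qed.

Lemma phi0_sd (y m h : R) : 1 <= y <= 2 -> 0 <= h -> 0 < m - h -> m + h < 1 ->
  Rabs (phi0 y (m + h) + phi0 y (m - h) - 2 * phi0 y m) <= 18 * h ^ 2.
Proof.
  intros Hy Hh H1 H2.
  apply (second_diff (phi0 y) (phi0' y) (phi0'' y) 0 1); auto.
  - intros t Ht. apply d_phi0; lra.
  - intros t Ht. apply d_phi0'; lra.
  - intros t Ht. apply phi0''_bound; lra.
Qed.

Definition SDb (g : R -> R) (K : R) := forall m h, 0 <= h -> 0 < m - h -> m + h < 1 ->
  Rabs (g (m + h) + g (m - h) - 2 * g m) <= K * h ^ 2.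

Lemma Rr_sd_base (y : R) : 1 <= y <= 2 -> SDb (fun t => Rr t y) 24.
Proof.
  intros Hy m h Hh H1 H2.
  rewrite !Rr_split by lra.
  assert (A1 := phi0_sd y m h Hy Hh H1 H2). assert (A2 := T_sd y m h Hy Hh H1 H2).
  assert (HP := PI_4). assert (HP0 := PI_RGT_0).
  assert (PI ^ 2 / 3 <= 6) by nra.
  assert (0 <= h ^ 2) by nra.
  match goal with |- Rabs ?e <= _ =>
    replace e with ((phi0 y (m + h) + phi0 y (m - h) - 2 * phi0 y m) +
       (Series (fun n => psi y n (m + h)) + Series (fun n => psi y n (m - h)) - 2 * Series (fun n => psi y n m))) by ring
  end.
  eapply Rle_trans; [apply Rabs_triang|]. nra.
Qed.


Lemma sum_n_R_S (a : nat -> R) (N : nat) : sum_n a (S N) = sum_n a N + a (S N).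
Proof. rewrite sum_Sn. reflexivity. Qed.

Lemma psum_nonneg (a : nat -> R) (N : nat) : (forall n, 0 <= a n) -> 0 <= sum_n a N.
Proof.
  intros H. induction N as [|N IH].
  - rewrite sum_O. apply H.
  - rewrite sum_n_R_S. specialize (H (S N)). lra.
Qed.

Lemma psum_incr (a : nat -> R) (N M : nat) : (forall n, 0 <= a n) -> (N <= M)%nat -> sum_n a N <= sum_n a M.
Proof.
  intros H HNM. induction HNM as [|M HNM IH]; [lra|].
  rewrite sum_n_R_S. specialize (H (S M)). lra.
Qed.

Lemma psum_le_series (a : nat -> R) (l : R) (N : nat) : (forall n, 0 <= a n) -> is_series a l -> sum_n a N <= l.
Proof.
  intros H Hs.
  assert (Hl : is_lim_seq (fun M => sum_n a (M + N)) l).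
  { apply (proj1 (is_lim_seq_incr_n (sum_n a) N l)). exact Hs. }
  assert (Hle := is_lim_seq_le (fun _ => sum_n a N) (fun M => sum_n a (M + N)) (sum_n a N) l).
  simpl in Hle. apply Hle.
  - intros M. apply psum_incr; auto. lia.
  - apply is_lim_seq_const.
  - exact Hl.
Qed.

Lemma lim_finite_sum (u : nat -> nat -> R) (l : nat -> R) (K : nat) :
  (forall k, is_lim_seq (u k) (l k)) -> is_lim_seq (fun N => sum_n (fun k => u k N) K) (sum_n l K).
Proof.
  intros H. induction K as [|K IH].
  - rewrite sum_O. eapply is_lim_seq_ext; [| apply H]. intros N. rewrite sum_O. reflexivity.
  - rewrite sum_n_R_S. eapply is_lim_seq_ext.
    + intros N. symmetry. apply sum_n_R_S.
    + apply is_lim_seq_plus'; auto.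
Qed.

Lemma sum_le (f g : nat -> R) (N : nat) : (forall n, f n <= g n) -> sum_n f N <= sum_n g N.
Proof.
  intros H. induction N as [|N IH].
  - rewrite !sum_O. apply H.
  - rewrite !sum_n_R_S. specialize (H (S N)). lra.
Qed.

Lemma fub_bound (a : nat -> nat -> R) (r c : nat -> R) (St : R) :
  (forall n k, 0 <= a n k) -> (forall n, is_series (a n) (r n)) ->
  (forall k, is_series (fun n => a n k) (c k)) -> is_series r St ->
  forall K, sum_n c K <= St.
Proof.
  intros Hp Hr Hc HS K.
  assert (HL : is_lim_seq (fun N => sum_n (fun k => sum_n (fun n => a n k) N) K) (sum_n c K)).
  { apply lim_finite_sum. intros k. apply Hc. }
  assert (Hle := is_lim_seq_le (fun N => sum_n (fun k => sum_n (fun n => a n k) N) K) (fun _ => St) (sum_n c K) St).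
  simpl in Hle. apply Hle; auto.
  - intros N. rewrite <- sum_n_switch.
    eapply Rle_trans.
    + apply (sum_le _ r). intros n. apply psum_le_series; auto.
    + apply psum_le_series; auto.
      intros n. specialize (Hr n). eapply Rle_trans; [| apply (psum_le_series (a n) (r n) 0); auto].
      rewrite sum_O. apply Hp.
  - apply is_lim_seq_const.
Qed.

Lemma fubini (a : nat -> nat -> R) (r c : nat -> R) (St : R) :
  (forall n k, 0 <= a n k) -> (forall n, is_series (a n) (r n)) ->
  (forall k, is_series (fun n => a n k) (c k)) -> is_series r St -> is_series c St.
Proof.
  intros Hp Hr Hc HS.
  assert (Hcp : forall k, 0 <= c k).
  { intros k. eapply Rle_trans; [| apply (psum_le_series (fun n => a n k) (c k) 0); auto].
    rewrite sum_O. apply Hp. }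
  assert (Hrp : forall n, 0 <= r n).
  { intros n. eapply Rle_trans; [| apply (psum_le_series (a n) (r n) 0); auto].
    rewrite sum_O. apply Hp. }
  assert (B1 := fub_bound a r c St Hp Hr Hc HS).
  destruct (ex_finite_lim_seq_incr (sum_n c) St) as [Sc HSc].
  - intros n. rewrite sum_n_R_S. specialize (Hcp (Datatypes.S n)). lra.
  - exact B1.
  assert (Hc' : is_series c Sc) by exact HSc.
  assert (B2 := fub_bound (fun k n => a n k) c r Sc (fun n k => Hp k n) Hc Hr Hc').
  assert (E1 := is_lim_seq_le (sum_n c) (fun _ => St) Sc St B1 HSc (is_lim_seq_const St)).
  assert (E2 := is_lim_seq_le (sum_n r) (fun _ => Sc) St Sc B2 HS (is_lim_seq_const Sc)).
  simpl in E1, E2. replace St with Sc by lra. exact Hc'.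
Qed.


Fixpoint lp (N : nat) (u : R) : R :=
  match N with O => 0 | S n => lp n u + u ^ (S n) / INR (S n) end.

Lemma d_lp (N : nat) (u : R) : u <> 1 -> is_derive (lp N) u ((1 - u ^ N) / (1 - u)).
Proof.
  intros Hu. induction N as [|n IH].
  - simpl. replace ((1 - 1) / (1 - u)) with 0 by (field; lra). auto_derive; auto.
  - change (lp (S n)) with (fun u => lp n u + u ^ (S n) / INR (S n)).
    assert (HI : 0 < INR (S n)) by (apply lt_0_INR; lia).
    eapply is_derive_eq.
    + apply (is_derive_plus (lp n) (fun u => u ^ (S n) / INR (S n))); [exact IH|].
      auto_derive; auto.
    + unfold plus; simpl. field. split; [lra|]. destruct n; [lra|]. pose proof (pos_INR (S n)). lra.
Qed.

Lemma lp_0 (N : nat) : lp N 0 = 0.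
Proof. induction N as [|n IH]; [reflexivity|]. change (lp (S n) 0) with (lp n 0 + 0 ^ S n / INR (S n)). rewrite IH, pow_i by lia. unfold Rdiv. ring. Qed.

Lemma lp_bound (N : nat) (u : R) : 0 <= u < 1 ->
  0 <= - ln (1 - u) - lp N u <= u ^ (S N) / (1 - u).
Proof.
  intros Hu.
  assert (Hd : forall t, 0 <= t <= u -> is_derive (fun t => - ln (1 - t) - lp N t) t (t ^ N / (1 - t))).
  { intros t Ht. eapply is_derive_eq.
    - apply (is_derive_minus (fun t => - ln (1 - t)) (lp N)).
      + auto_derive; [lra|]. reflexivity.
      + apply d_lp. lra.
    - unfold minus, plus, opp; simpl. field. lra. }
  assert (H0 : - ln (1 - 0) - lp N 0 = 0) by (rewrite lp_0; replace (1 - 0) with 1 by ring; rewrite ln_1; ring).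
  split.
  - assert (A := incr_of_deriv (fun t => - ln (1 - t) - lp N t) (fun t => t ^ N / (1 - t)) 0 u ltac:(lra) Hd).
    cbv beta in A. rewrite H0 in A. apply A.
    intros t Ht. apply Rdiv_le_0_compat; [apply pow_le; lra| lra].
  - assert (A := incr_of_deriv (fun t => t * (u ^ N / (1 - u)) - (- ln (1 - t) - lp N t))
       (fun t => u ^ N / (1 - u) - t ^ N / (1 - t)) 0 u ltac:(lra)).
    cbv beta in A. rewrite H0 in A.
    cut (0 <= u * (u ^ N / (1 - u)) - (- ln (1 - u) - lp N u)).
    { intros. replace (u ^ S N / (1 - u)) with (u * (u ^ N / (1 - u))) by (simpl; field; lra). lra. }
    replace 0 with (0 * (u ^ N / (1 - u)) - 0) by ring. apply A.
    + intros t Ht. apply (is_derive_minus (fun t => t * (u ^ N / (1 - u)))).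
      * auto_derive; auto. ring.
      * apply Hd; auto.
    + intros t Ht. cbv beta.
      assert (t ^ N <= u ^ N) by (apply pow_incr; lra).
      assert (0 <= t ^ N) by (apply pow_le; lra).
      assert (t ^ N / (1 - t) <= u ^ N / (1 - t)) by (unfold Rdiv; apply Rmult_le_compat_r; [apply Rlt_le, Rinv_0_lt_compat|]; lra).
      assert (u ^ N / (1 - t) <= u ^ N / (1 - u)).
      { unfold Rdiv. apply Rmult_le_compat_l; [apply pow_le; lra|]. apply Rinv_le_contravar; lra. }
      lra.
Qed.

Lemma log_series (u : R) : 0 <= u < 1 ->
  is_series (fun k => u ^ (S k) / INR (S k)) (- ln (1 - u)).
Proof.
  intros Hu.
  assert (Hs : forall N, sum_n (fun k => u ^ (S k) / INR (S k)) N = lp (S N) u).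
  { induction N as [|N IH].
    - rewrite sum_O. simpl. ring.
    - rewrite sum_Sn, IH. reflexivity. }
  unfold is_series. change (is_lim_seq (sum_n (fun k => u ^ (S k) / INR (S k))) (- ln (1 - u))).
  apply (is_lim_seq_le_le (fun N => - ln (1 - u) - (u ^ 2 / (1 - u)) * u ^ N) _ (fun _ => - ln (1 - u))).
  - intros N. rewrite Hs. destruct (lp_bound (S N) u Hu) as [A B].
    replace (u ^ 2 / (1 - u) * u ^ N) with (u ^ S (S N) / (1 - u)) by (simpl; field; lra). lra.
  - replace (Finite (- ln (1 - u))) with (Finite (- ln (1 - u) - u ^ 2 / (1 - u) * 0)) by (f_equal; ring).
    apply is_lim_seq_minus'; [apply is_lim_seq_const|].
    apply (is_lim_seq_scal_l _ (u ^ 2 / (1 - u)) 0). apply is_lim_seq_geom. rewrite Rabs_pos_eq; lra.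
  - apply is_lim_seq_const.
Qed.


Lemma w_bounds (s : R) : 0 < s ->
  0 <= 1 - 2 * s / (exp s - exp (- s)) <= s.
Proof.
  intros Hs.
  assert (H1 := sh_ge s ltac:(lra)). assert (H2 := sh_le s ltac:(lra)).
  assert (Hp : exp s * exp (- s) = 1) by (rewrite <- exp_plus; replace (s + - s) with 0 by ring; apply exp_0).
  assert (Hsh : 0 < exp s - exp (- s)) by lra.
  assert (0 < exp s) by apply exp_pos. assert (0 < exp (- s)) by apply exp_pos.
  split.
  - cut (2 * s / (exp s - exp (- s)) <= 1). lra.
    apply (Rmult_le_reg_r (exp s - exp (- s))); auto.
    replace (2 * s / (exp s - exp (- s)) * (exp s - exp (- s))) with (2 * s) by (field; lra). lra.
  - destruct (Rle_lt_dec 1 s).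
    + assert (0 <= 2 * s / (exp s - exp (- s))) by (apply Rdiv_le_0_compat; lra). lra.
    + assert (Hm : exp (- s) <= 1) by (rewrite <- exp_0; destruct (Req_dec s 0); [lra|]; apply Rlt_le, exp_increasing; lra).
      assert (He : 1 - s <= exp (- s)) by (assert (Hq1 := exp_ineq1_le (- s)); lra).
      assert (Hc : (1 - s) * (exp s + exp (- s)) <= 2) by nra.
      cut (1 - s <= 2 * s / (exp s - exp (- s))). lra.
      apply (Rmult_le_reg_r (exp s - exp (- s))); auto.
      replace (2 * s / (exp s - exp (- s)) * (exp s - exp (- s))) with (2 * s) by (field; lra). nra.
Qed.

Section Lead.
Variable x : R.
Hypothesis Hx : 0 < x.

Definition uu (n : nat) := exp (- (x * (INR n + 1 / 2))).
Definition aa (n k : nat) := uu n ^ (S k) / INR (S k).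
Definition cc (k : nat) := (exp (- (x / 2)) ^ (S k) / (1 - exp (- x) ^ (S k))) / INR (S k).

Lemma uu_eq (n : nat) : uu n = exp (- (x / 2)) * exp (- x) ^ n.
Proof. unfold uu. rewrite exp_pow_INR, <- exp_plus. f_equal. field. Qed.

Lemma uu_range (n : nat) : 0 < uu n < 1.
Proof.
  unfold uu. split; [apply exp_pos|]. apply exp_neg_lt1. assert (HI := pos_INR n). nra.
Qed.

Lemma row_series (n : nat) : is_series (aa n) (- ell (x * (INR n + 1 / 2))).
Proof.
  unfold aa, ell. fold (uu n). destruct (uu_range n). apply log_series. lra.
Qed.

Lemma col_series (k : nat) : is_series (fun n => aa n k) (cc k).
Proof.
  assert (HB := exp_neg_lt1 x Hx). assert (HB0 := exp_pos (- x)).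
  assert (Hq : 0 <= exp (- x) ^ S k < 1).
  { split; [apply pow_le; lra|]. apply pow_lt_1_compat; [lra|lia]. }
  assert (G := is_series_geom (exp (- x) ^ S k) ltac:(rewrite Rabs_pos_eq; lra)).
  apply (is_series_scal_l (V := R_NormedModule) (exp (- (x / 2)) ^ S k / INR (S k))) in G.
  assert (HI : 0 < INR (S k)) by (apply lt_0_INR; lia).
  replace (cc k) with (scal (exp (- (x / 2)) ^ S k / INR (S k)) (/ (1 - exp (- x) ^ S k))).
  - eapply is_series_ext; [| exact G]. intros n. unfold aa. rewrite uu_eq.
    change (scal ?a ?b) with (Rmult a b).
    match goal with |- ?l = ?r => change (@eq R l r) end.
    rewrite Rpow_mult_distr, <- !pow_mult, Nat.mul_comm. field. lra.
  - unfold cc. change (scal ?a ?b) with (Rmult a b).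
    match goal with |- ?l = ?r => change (@eq R l r) end. field. lra.
Qed.

Lemma aa_nonneg (n k : nat) : 0 <= aa n k.
Proof.
  unfold aa. destruct (uu_range n). apply Rdiv_le_0_compat; [apply pow_le; lra| apply lt_0_INR; lia].
Qed.

Lemma ex_ellh : ex_series (fun n => ell (x * (INR n + 1 / 2))).
Proof. apply ex_ell; lra. Qed.

Lemma cc_series : is_series cc (- Series (fun n => ell (x * (INR n + 1 / 2)))).
Proof.
  apply (fubini aa (fun n => - ell (x * (INR n + 1 / 2))) cc).
  - apply aa_nonneg.
  - apply row_series.
  - apply col_series.
  - assert (H := Series_correct _ ex_ellh). apply is_series_opp in H.
    eapply is_series_ext; [| exact H]. intros n. reflexivity.
Qed.

Lemma Fs_half : Fs (1 / 2) x = - 2 * Series cc.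
Proof.
  rewrite (is_series_unique _ _ cc_series).
  unfold Fs.
  replace (- 2 * - Series (fun n => ell (x * (INR n + 1 / 2)))) with (2 * Series (fun n => ell (x * (INR n + 1 / 2)))) by ring.
  rewrite <- Series_scal_l. apply Series_ext. intros n.
  replace (INR n + 1 - 1 / 2) with (INR n + 1 / 2) by field. ring.
Qed.

Definition dd (k : nat) := 1 / (INR k + 1) ^ 2 - x * cc k.

Lemma dd_eq (k : nat) : dd k = (1 - 2 * (x / 2 * INR (S k)) / (exp (x / 2 * INR (S k)) - exp (- (x / 2 * INR (S k))))) / (INR k + 1) ^ 2.
Proof.
  unfold dd, cc. set (s := x / 2 * INR (S k)).
  assert (HI : INR (S k) = INR k + 1) by apply S_INR.
  assert (Hs : 0 < s) by (unfold s; rewrite HI; assert (HI0 := pos_INR k); nra).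
  rewrite !exp_pow_INR.
  replace (x / 2 * INR (S k)) with s by reflexivity.
  replace (x * INR (S k)) with (s + s) by (unfold s; field).
  replace (- (s + s)) with (- s + - s) by ring. rewrite exp_plus.
  assert (Hp : exp s * exp (- s) = 1) by (rewrite <- exp_plus; replace (s + - s) with 0 by ring; apply exp_0).
  assert (H1 := exp_neg_lt1 s Hs). assert (H0 := exp_pos (- s)).
  assert (Hes : exp s = / exp (- s)) by (field_simplify_eq; lra).
  rewrite Hes. rewrite HI.
  assert (0 < INR k + 1) by (assert (HI0 := pos_INR k); lra).
  replace x with (2 * s / (INR k + 1)) by (unfold s; rewrite HI; field; lra).
  set (e := exp (- s)) in *.
  assert (He2 : e * e < 1) by nra.
  assert (Hd : / e - e <> 0).
  { assert (1 < / e) by (rewrite <- Rinv_1; apply Rinv_lt_contravar; lra). lra. }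
  field. repeat split; lra.
Qed.

Lemma dd_bounds (k : nat) : 0 <= dd k <= x / 2 /\ dd k <= 1 / (INR k + 1) ^ 2.
Proof.
  rewrite dd_eq. set (s := x / 2 * INR (S k)).
  assert (HI : INR (S k) = INR k + 1) by apply S_INR.
  assert (HI0 := pos_INR k).
  assert (Hs : 0 < s) by (unfold s; rewrite HI; nra).
  destruct (w_bounds s Hs) as [W1 W2].
  assert (Hk : 0 < (INR k + 1) ^ 2) by (apply pow_lt; lra).
  assert (Hk1 : 1 <= (INR k + 1) ^ 2) by (rewrite <- (pow1 2); apply pow_incr; lra).
  set (w := 1 - 2 * s / (exp s - exp (- s))) in *.
  split; [split|].
  - apply Rdiv_le_0_compat; lra.
  - unfold Rdiv. apply (Rmult_le_reg_r ((INR k + 1) ^ 2)); [lra|].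
    rewrite Rmult_assoc, Rinv_l, Rmult_1_r by lra.
    assert (s <= x / 2 * (INR k + 1) ^ 2) by (unfold s; rewrite HI; nra). lra.
  - unfold Rdiv. apply Rmult_le_compat_r; [apply Rlt_le, Rinv_0_lt_compat; lra|]. 
    assert (w <= 1) by (unfold w; assert (0 <= 2 * s / (exp s - exp (- s))) by (apply Rdiv_le_0_compat; [lra|]; assert (H := sh_ge s); lra); lra).
    lra.
Qed.

Lemma ex_cc : ex_series cc.
Proof. eexists; exact cc_series. Qed.

Lemma dd_series : is_series dd (PI ^ 2 / 6 - x * Series cc).
Proof.
  unfold dd. apply (is_series_minus (V := R_NormedModule) _ (fun k => x * cc k)); [exact basel|].
  apply (is_series_scal_l (V := R_NormedModule)). apply Series_correct, ex_cc.
Qed.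

Lemma xRr_half : x * Rr (1 / 2) x = 2 * Series dd - x * ln 2.
Proof.
  rewrite (is_series_unique _ _ dd_series). unfold Rr. rewrite Fs_half.
  replace (1 / 2 * PI) with (PI / 2) by field. rewrite sin_PI2, Rmult_1_r.
  field. lra.
Qed.

End Lead.

Lemma lead : forall eps, 0 < eps -> exists delta, 0 < delta /\ forall x, 0 < x < delta -> Rabs (x * Rr (1/2) x) < eps.
Proof.
  intros eps Heps.
  assert (HB : is_lim_seq (sum_n (fun n => 1 / (INR n + 1) ^ 2)) (PI ^ 2 / 6)) by exact basel.
  apply is_lim_seq_spec in HB.
  destruct (HB (mkposreal (eps / 8) ltac:(lra))) as [N0 HN0]. simpl in HN0.
  set (K := S N0).
  exists (eps / (4 * (INR K + 1))). split.
  { apply Rdiv_lt_0_compat; [lra|]. assert (HI := pos_INR K). lra. }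
  intros x [Hx Hxd].
  rewrite (xRr_half x Hx).
  set (b := fun n : nat => 1 / (INR n + 1) ^ 2).
  assert (Hexd : ex_series (dd x)) by (eexists; apply dd_series; auto).
  assert (Hexb : ex_series b) by (eexists; exact basel).
  rewrite (Series_incr_n (dd x) K) by (unfold K; lia || auto).
  assert (Hpart : sum_f_R0 (dd x) (pred K) <= INR K * (x / 2)).
  { unfold K; simpl pred. clear -Hx. induction N0 as [|N IH].
    - simpl. destruct (dd_bounds x Hx 0) as [[_ A] _]. lra.
    - simpl sum_f_R0. destruct (dd_bounds x Hx (S N)) as [[_ A] _]. rewrite (S_INR (S N)). lra. }
  assert (Hpart0 : 0 <= sum_f_R0 (dd x) (pred K)).
  { apply cond_pos_sum. intros n. apply (dd_bounds x Hx n). }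
  assert (Htail : Series (fun k => dd x (K + k)%nat) <= PI ^ 2 / 6 - sum_f_R0 b (pred K)).
  { assert (E := Series_incr_n b K ltac:(unfold K; lia) Hexb).
    rewrite (is_series_unique b _ basel) in E.
    assert (Et : Series (fun k => b (K + k)%nat) = PI ^ 2 / 6 - sum_f_R0 b (pred K)) by lra.
    rewrite <- Et. apply Series_le.
    - intros n. destruct (dd_bounds x Hx (K + n)) as [[A _] B]. split; auto.
    - apply (ex_series_incr_n b K). exact Hexb. }
  assert (Htail0 : 0 <= Series (fun k => dd x (K + k)%nat)).
  { assert (Z : Series (fun _ : nat => 0) = 0).
    { rewrite (Series_ext (fun _ => 0) (fun n => 0 * b n)) by (intros; ring).
      rewrite Series_scal_l. ring. }
    rewrite <- Z. apply Series_le.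
    - intros n. split; [lra|]. apply (dd_bounds x Hx (K + n)).
    - apply (ex_series_incr_n (dd x) K). exact Hexd. }
  assert (HK : Rabs (sum_n b N0 - PI ^ 2 / 6) < eps / 8) by (apply HN0; lia).
  rewrite sum_n_Reals in HK. unfold K in *; simpl pred in *.
  assert (Hln : 0 < ln 2 < 1).
  { split; [rewrite <- ln_1; apply ln_increasing; lra|].
    rewrite <- (ln_exp 1). apply ln_increasing; [lra|]. assert (H := exp_ineq1 1 ltac:(lra)). lra. }
  assert (HI := pos_INR (S N0)).
  assert (Hx1 : x * (INR (S N0) + 1) < eps / 4).
  { apply (Rmult_lt_reg_r (/ (INR (S N0) + 1))); [apply Rinv_0_lt_compat; lra|].
    replace (x * (INR (S N0) + 1) * / (INR (S N0) + 1)) with x by (field; lra).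
    replace (eps / 4 * / (INR (S N0) + 1)) with (eps / (4 * (INR (S N0) + 1))) by (field; lra). lra. }
  apply Rabs_def1.
  - apply Rabs_def2 in HK. nra.
  - nra.
Qed.


Lemma nat_arch (r : R) : exists n : nat, r < INR n.
Proof.
  destruct (archimed (Rabs r)) as [H1 _].
  exists (Z.abs_nat (up (Rabs r))).
  rewrite INR_IZR_INZ, Zabs2Nat.id_abs, abs_IZR.
  assert (H := Rle_abs r). assert (H' := Rle_abs (IZR (up (Rabs r)))). lra.
Qed.

Lemma INR_le_pow2 (n : nat) : INR n <= 2 ^ n.
Proof.
  induction n as [|n IH]; [simpl; lra|].
  rewrite S_INR. simpl. assert (1 <= 2 ^ n) by (apply pow_R1_Rle; lra). lra.
Qed.

Lemma pow2_pos (j : nat) : 0 < 2 ^ j.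
Proof. apply pow_lt; lra. Qed.

Lemma SD_step (x K : R) : 0 < x -> SDb (fun t => Rr t (2 * x)) K -> SDb (fun t => Rr t x) (K / 2).
Proof.
  intros Hx HS m h Hh H1 H2.
  rewrite (Rr_rel (m + h) x), (Rr_rel (m - h) x), (Rr_rel m x) by lra.
  assert (A1 := HS (m / 2) (h / 2) ltac:(lra) ltac:(lra) ltac:(lra)).
  assert (A2 := HS ((m + 1) / 2) (h / 2) ltac:(lra) ltac:(lra) ltac:(lra)).
  replace (m / 2 + h / 2) with ((m + h) / 2) in A1 by field.
  replace (m / 2 - h / 2) with ((m - h) / 2) in A1 by field.
  replace ((m + 1) / 2 + h / 2) with ((m + h + 1) / 2) in A2 by field.
  replace ((m + 1) / 2 - h / 2) with ((m - h + 1) / 2) in A2 by field.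
  match goal with |- Rabs ?e <= _ =>
    replace e with ((Rr ((m + h) / 2) (2 * x) + Rr ((m - h) / 2) (2 * x) - 2 * Rr (m / 2) (2 * x)) +
      (Rr ((m + h + 1) / 2) (2 * x) + Rr ((m - h + 1) / 2) (2 * x) - 2 * Rr ((m + 1) / 2) (2 * x))) by ring
  end.
  eapply Rle_trans; [apply Rabs_triang|].
  replace (K / 2 * h ^ 2) with (K * (h / 2) ^ 2 + K * (h / 2) ^ 2) by field. lra.
Qed.

Lemma SD_iter (j : nat) (y : R) : 1 <= y <= 2 -> SDb (fun t => Rr t (y / 2 ^ j)) (24 / 2 ^ j).
Proof.
  intros Hy. induction j as [|j IH].
  - simpl. replace (y / 1) with y by field. replace (24 / 1) with 24 by field.
    apply Rr_sd_base; auto.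
  - assert (Hp := pow2_pos j).
    replace (24 / 2 ^ S j) with ((24 / 2 ^ j) / 2) by (simpl; field; lra).
    apply SD_step.
    + simpl. apply Rdiv_lt_0_compat; nra.
    + replace (2 * (y / 2 ^ S j)) with (y / 2 ^ j) by (simpl; field; lra). exact IH.
Qed.

Lemma exists_scale (x : R) : 0 < x <= 2 -> exists j y, 1 <= y <= 2 /\ x = y / 2 ^ j.
Proof.
  intros Hx.
  assert (Hgen : forall n : nat, forall x, 0 < x <= 2 -> 2 / 2 ^ n < x -> exists j y, 1 <= y <= 2 /\ x = y / 2 ^ j).
  { induction n as [|n IH]; intros z Hz Hn.
    - simpl in Hn. lra.
    - destruct (Rle_lt_dec 1 z).
      + exists 0%nat, z. split; [lra|]. simpl; field.
      + destruct (IH (2 * z)) as [j [y [Hy Hj]]]; [lra| |].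
        * simpl in Hn. assert (Hp := pow2_pos n).
          replace (2 / (2 * 2 ^ n)) with ((2 / 2 ^ n) / 2) in Hn by (field; lra). lra.
        * exists (S j), y. split; auto. assert (Hp := pow2_pos j). simpl.
          replace (y / (2 * 2 ^ j)) with ((y / 2 ^ j) / 2) by (field; lra). lra. }
  destruct (nat_arch (2 / x)) as [n Hn].
  apply (Hgen n); auto.
  assert (Hp := pow2_pos n). assert (H2 := INR_le_pow2 n).
  apply (Rmult_lt_reg_r (2 ^ n / x)). apply Rdiv_lt_0_compat; lra.
  replace (2 / 2 ^ n * (2 ^ n / x)) with (2 / x) by (field; lra).
  replace (x * (2 ^ n / x)) with (2 ^ n) by (field; lra). lra.
Qed.

Lemma uniform (x b : R) : 0 < x <= 2 -> 0 < b < 1 -> Rabs (Rr b x - Rr (1/2) x) <= 3 * x.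
Proof.
  intros Hx Hb.
  destruct (exists_scale x Hx) as [j [y [Hy ->]]].
  assert (HS := SD_iter j y Hy).
  assert (Hp := pow2_pos j).
  set (h := Rabs (b - 1/2)).
  assert (Hh : 0 <= h < 1/2) by (unfold h; apply Rabs_le_between' || idtac; split; [apply Rabs_pos|]; apply Rabs_def1; lra).
  assert (A := HS (1/2) h ltac:(lra) ltac:(lra) ltac:(lra)).
  assert (Hsum : Rr (1/2 + h) (y / 2 ^ j) + Rr (1/2 - h) (y / 2 ^ j) = 2 * Rr b (y / 2 ^ j)).
  { unfold h. destruct (Rle_lt_dec (1/2) b).
    - rewrite Rabs_pos_eq by lra.
      replace (1/2 + (b - 1/2)) with b by lra.
      replace (1/2 - (b - 1/2)) with (1 - b) by lra. rewrite Rr_sym. ring.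
    - rewrite Rabs_left by lra.
      replace (1/2 + - (b - 1/2)) with (1 - b) by lra.
      replace (1/2 - - (b - 1/2)) with b by lra. rewrite Rr_sym. ring. }
  cbv beta in A. rewrite Hsum in A.
  assert (Hk : 24 / 2 ^ j * h ^ 2 <= 6 * (y / 2 ^ j)).
  { assert (h ^ 2 <= 1/4) by nra.
    assert (0 < 24 / 2 ^ j) by (apply Rdiv_lt_0_compat; lra).
    assert (24 / 2 ^ j * h ^ 2 <= 24 / 2 ^ j * (1/4)) by (apply Rmult_le_compat_l; lra).
    assert (24 / 2 ^ j * (1/4) = 6 * (1 / 2 ^ j)) by (field; lra).
    assert (1 / 2 ^ j <= y / 2 ^ j) by (unfold Rdiv; apply Rmult_le_compat_r; [apply Rlt_le, Rinv_0_lt_compat|]; lra).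
    lra. }
  replace (2 * Rr b (y / 2 ^ j) - 2 * Rr (1 / 2) (y / 2 ^ j)) with (2 * (Rr b (y / 2 ^ j) - Rr (1 / 2) (y / 2 ^ j))) in A by ring.
  rewrite Rabs_mult, (Rabs_pos_eq 2) in A by lra. lra.
Qed.

Lemma rho_rec (x : R) : 0 < x <= 1 -> Rabs (Rr (1/2) x - 2 * Rr (1/2) (2 * x)) <= 12 * x.
Proof.
  intros Hx. rewrite (Rr_rel (1/2) x) by lra.
  replace (1/2/2) with (1/4) by field. replace ((1/2 + 1)/2) with (3/4) by field.
  assert (A1 := uniform (2 * x) (1/4) ltac:(lra) ltac:(lra)).
  assert (A2 := uniform (2 * x) (3/4) ltac:(lra) ltac:(lra)).
  match goal with |- Rabs ?e <= _ =>
    replace e with ((Rr (1/4) (2 * x) - Rr (1/2) (2 * x)) + (Rr (3/4) (2 * x) - Rr (1/2) (2 * x))) by ring end.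
  eapply Rle_trans; [apply Rabs_triang|]. lra.
Qed.

Lemma pow4 (k : nat) : 4 ^ k = 2 ^ k * 2 ^ k.
Proof. rewrite <- Rpow_mult_distr. replace (2 * 2) with 4 by lra. reflexivity. Qed.

Lemma rho_bound (x : R) : 0 < x <= 2 -> Rabs (Rr (1/2) x) <= 8 * x.
Proof.
  intros Hx. destruct (exists_scale x Hx) as [j [y [Hy ->]]].
  set (v := fun k : nat => Rr (1/2) (y / 2 ^ k) / 2 ^ k).
  assert (Hstep : forall k, Rabs (v (S k) - v k) <= 6 / 4 ^ k).
  { intros k. unfold v. assert (Hp := pow2_pos k). rewrite pow4.
    assert (Hx1 : 0 < y / 2 ^ S k <= 1).
    { simpl. split; [apply Rdiv_lt_0_compat; nra|].
      apply (Rmult_le_reg_r (2 * 2 ^ k)); [lra|]. replace (y / (2 * 2 ^ k) * (2 * 2 ^ k)) with y by (field; lra).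
      assert (1 <= 2 ^ k) by (apply pow_R1_Rle; lra). nra. }
    assert (A := rho_rec _ Hx1).
    replace (2 * (y / 2 ^ S k)) with (y / 2 ^ k) in A by (simpl; field; lra).
    replace (Rr (1 / 2) (y / 2 ^ S k) / 2 ^ S k - Rr (1 / 2) (y / 2 ^ k) / 2 ^ k)
      with ((Rr (1 / 2) (y / 2 ^ S k) - 2 * Rr (1 / 2) (y / 2 ^ k)) / (2 * 2 ^ k)) by (simpl; field; lra).
    unfold Rdiv at 1. rewrite Rabs_mult, (Rabs_pos_eq (/ (2 * 2 ^ k))) by (apply Rlt_le, Rinv_0_lt_compat; lra).
    apply (Rmult_le_reg_r (2 * 2 ^ k)); [lra|].
    rewrite Rmult_assoc, Rinv_l, Rmult_1_r by lra.
    eapply Rle_trans; [exact A|].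
    simpl. apply (Rmult_le_reg_r (2 ^ k)); [lra|].
    replace (12 * (y / (2 * 2 ^ k)) * 2 ^ k) with (6 * y) by (field; lra).
    replace (6 / (2 ^ k * 2 ^ k) * (2 * 2 ^ k) * 2 ^ k) with 12 by (field; lra). lra. }
  assert (Htel : forall d k, Rabs (v k - v (k + d)%nat) <= 8 / 4 ^ k - 8 / 4 ^ (k + d)).
  { induction d as [|d IH]; intros k.
    - rewrite Nat.add_0_r. unfold Rminus. rewrite Rplus_opp_r, Rabs_R0. lra.
    - replace (k + S d)%nat with (S (k + d)) by lia.
      assert (A := Hstep (k + d)%nat). assert (B := IH k).
      assert (Hp := pow_lt 4 (k + d) ltac:(lra)).
      replace (v k - v (S (k + d))) with ((v k - v (k + d)%nat) + - (v (S (k + d)) - v (k + d)%nat)) by ring.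
      eapply Rle_trans; [apply Rabs_triang|]. rewrite Rabs_Ropp.
      replace (8 / 4 ^ k - 8 / 4 ^ S (k + d)) with (8 / 4 ^ k - 8 / 4 ^ (k + d) + 6 / 4 ^ (k + d)) by (assert (0 < 4 ^ k) by (apply pow_lt; lra); simpl; field; lra).
      lra. }
  assert (Hvj : Rabs (v j) <= 8 / 4 ^ j).
  { apply Rle_plus_epsilon. intros eps Heps.
    destruct (lead eps Heps) as [delta [Hd Hl]].
    destruct (nat_arch (2 / delta)) as [n Hn].
    set (k := (j + n)%nat).
    assert (Hpk := pow2_pos k).
    assert (Hk : y / 2 ^ k < delta).
    { assert (H2 := INR_le_pow2 n).
      assert (2 ^ n <= 2 ^ k) by (apply Rle_pow; [lra|unfold k; lia]).
      apply (Rmult_lt_reg_r (2 ^ k / delta)); [apply Rdiv_lt_0_compat; lra|].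
      replace (y / 2 ^ k * (2 ^ k / delta)) with (y / delta) by (field; lra).
      replace (delta * (2 ^ k / delta)) with (2 ^ k) by (field; lra).
      assert (y / delta <= 2 / delta) by (unfold Rdiv; apply Rmult_le_compat_r; [apply Rlt_le, Rinv_0_lt_compat|]; lra).
      lra. }
    assert (Hyk : 0 < y / 2 ^ k) by (apply Rdiv_lt_0_compat; lra).
    assert (A := Hl (y / 2 ^ k) ltac:(lra)).
    assert (Hvk : Rabs (v k) < eps).
    { unfold v. replace (y / 2 ^ k * Rr (1 / 2) (y / 2 ^ k)) with (y * (Rr (1 / 2) (y / 2 ^ k) / 2 ^ k)) in A by (field; lra).
      rewrite Rabs_mult, (Rabs_pos_eq y) in A by lra.
      assert (0 <= Rabs (Rr (1 / 2) (y / 2 ^ k) / 2 ^ k)) by apply Rabs_pos. nra. }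
    assert (B := Htel n j). fold k in B.
    replace (v j) with ((v j - v k) + v k) by ring.
    eapply Rle_trans; [apply Rabs_triang|].
    assert (0 < 8 / 4 ^ k) by (apply Rdiv_lt_0_compat; [lra| apply pow_lt; lra]).
    lra. }
  unfold v in Hvj. assert (Hp := pow2_pos j). rewrite pow4 in Hvj.
  unfold Rdiv at 1 in Hvj. rewrite Rabs_mult, (Rabs_pos_eq (/ 2 ^ j)) in Hvj by (apply Rlt_le, Rinv_0_lt_compat; lra).
  apply (Rmult_le_compat_r (2 ^ j)) in Hvj; [|lra].
  rewrite Rmult_assoc, Rinv_l, Rmult_1_r in Hvj by lra.
  eapply Rle_trans; [exact Hvj|].
  replace (8 / (2 ^ j * 2 ^ j) * 2 ^ j) with (8 * (1 / 2 ^ j)) by (field; lra).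
  apply Rmult_le_compat_l; [lra|]. unfold Rdiv. apply Rmult_le_compat_r; [apply Rlt_le, Rinv_0_lt_compat|]; lra.
Qed.

Lemma Rr_bound (x b : R) : 0 < x <= 2 -> 0 < b < 1 -> Rabs (Rr b x) <= 11 * x.
Proof.
  intros Hx Hb. assert (A := uniform x b Hx Hb). assert (B := rho_bound x Hx).
  replace (Rr b x) with ((Rr b x - Rr (1/2) x) + Rr (1/2) x) by ring.
  eapply Rle_trans; [apply Rabs_triang|]. lra.
Qed.


Lemma qpoch_exp (q c d : R) : 0 < q < 1 -> 0 < c -> 0 < d ->
  qpoch_inf q c d = exp (Series (fun n => ell ((- (d * ln q)) * (INR n + c / d)))).
Proof.
  intros Hq Hc Hd.
  assert (Hl : ln q < 0) by (rewrite <- ln_1; apply ln_increasing; lra).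
  set (y := - (d * ln q)). assert (Hy : 0 < y) by (unfold y; nra).
  set (t := fun n => ell (y * (INR n + c / d))).
  assert (Ht : forall n, ln (1 - Rpower q (c + d * INR n)) = t n).
  { intros n. unfold t, ell, Rpower. f_equal. f_equal. f_equal. unfold y. field. lra. }
  assert (Hpos : forall n, 0 < 1 - Rpower q (c + d * INR n)).
  { intros n. unfold Rpower. assert (HI := pos_INR n).
    assert (Hv : 0 < y * (INR n + c / d)) by (apply Rmult_lt_0_compat; [lra|]; assert (0 < c / d) by (apply Rdiv_lt_0_compat; lra); lra).
    assert (H := exp_neg_lt1 _ Hv).
    replace ((c + d * INR n) * ln q) with (- (y * (INR n + c / d))) by (unfold y; field; lra). lra. }
  assert (Hp : forall N, qpoch_partial q c d (S N) = exp (sum_n t N)).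
  { induction N as [|N IH].
    - change (qpoch_partial q c d 1) with (1 * (1 - Rpower q (c + d * INR 0))). rewrite sum_O, <- Ht, exp_ln by apply Hpos. ring.
    - change (qpoch_partial q c d (S (S N))) with (qpoch_partial q c d (S N) * (1 - Rpower q (c + d * INR (S N)))).
      rewrite IH, sum_Sn. unfold plus; simpl. rewrite exp_plus, <- Ht, exp_ln by apply Hpos. reflexivity. }
  assert (Hex : ex_series t) by (apply ex_ell; [lra| apply Rdiv_lt_0_compat; lra]).
  assert (HL : is_lim_seq (fun N => qpoch_partial q c d (S N)) (exp (Series t))).
  { eapply is_lim_seq_ext. intros N. symmetry. apply Hp.
    apply (is_lim_seq_continuous exp (sum_n t)).
    - apply derivable_continuous_pt, derivable_pt_exp.
    - apply Series_correct in Hex. exact Hex. }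
  unfold qpoch_inf. rewrite <- Lim_seq_incr_1, (is_lim_seq_unique _ _ HL). simpl.
  reflexivity.
Qed.

Theorem mainTheorem7 (a b : R) (ha : 0 < a) (hb : 0 < b) :
  exists (C delta : R), 0 < delta /\
    forall q : R, 0 < q -> 1 - delta < q -> q < 1 ->
      Rabs ( ln (qpoch_inf q a (a + b) * qpoch_inf q b (a + b))
             - ( PI ^ 2 / (3 * (a + b) * ln q)
                 + ln (2 * sin (a / (a + b) * PI)) ) )
      <= C * Rabs (ln q).
Proof.
  set (c := a + b). assert (Hc : 0 < c) by (unfold c; lra).
  exists (11 * c), (1 - exp (- (2 / c))). split.
  { assert (H := exp_neg_lt1 (2 / c) ltac:(apply Rdiv_lt_0_compat; lra)). lra. }
  intros q Hq0 Hq1 Hq2.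
  assert (Hl : ln q < 0) by (rewrite <- ln_1; apply ln_increasing; lra).
  set (x := - (c * ln q)). assert (Hx : 0 < x) by (unfold x; nra).
  assert (Hx2 : x <= 2).
  { assert (H : - (2 / c) < ln q).
    { rewrite <- (ln_exp (- (2 / c))). apply ln_increasing; [apply exp_pos| lra]. }
    unfold x. apply (Rmult_lt_compat_l c) in H; [|lra].
    replace (c * - (2 / c)) with (-2) in H by (field; lra). lra. }
  set (al := a / c). assert (Hal : 0 < al < 1).
  { unfold al. split; [apply Rdiv_lt_0_compat; lra|].
    apply (Rmult_lt_reg_r c); [lra|]. replace (a / c * c) with a by (field; lra). unfold c; lra. }
  rewrite (qpoch_exp q a c ltac:(lra) ha Hc), (qpoch_exp q b c ltac:(lra) hb Hc).
  rewrite ln_mult by apply exp_pos. rewrite !ln_exp.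
  assert (HF : Series (fun n => ell (- (c * ln q) * (INR n + a / c))) +
               Series (fun n => ell (- (c * ln q) * (INR n + b / c))) = Fs al x).
  { unfold Fs. rewrite Series_plus.
    - f_equal; apply Series_ext; intros n; fold x; unfold al; try reflexivity.
      f_equal. f_equal. replace (b / c) with (1 - a / c) by (unfold c; field; lra). ring.
    - apply ex_ell; [lra| lra].
    - apply (ex_series_ext (fun n => ell (x * (INR n + b / c)))).
      + intros n. f_equal. f_equal. unfold al. replace (b / c) with (1 - a / c) by (unfold c; field; lra). ring.
      + apply ex_ell; [lra| apply Rdiv_lt_0_compat; lra]. }
  fold c. rewrite HF.
  assert (HR := Rr_bound x al ltac:(lra) Hal).
  unfold Rr in HR.
  replace (PI ^ 2 / (3 * c * ln q)) with (- (PI ^ 2 / (3 * x))) by (unfold x; field; lra).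
  fold al.
  replace (Fs al x - (- (PI ^ 2 / (3 * x)) + ln (2 * sin (al * PI)))) with
    (Fs al x - ln (2 * sin (al * PI)) + PI ^ 2 / (3 * x)) by ring.
  eapply Rle_trans; [exact HR|].
  rewrite Rabs_left by lra. unfold x. lra.
Qed.
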